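(* Let $\Gamma$ be a countably infinite group, $\Sigma=\{\Gamma_n\}$ finite-index normal subgroups with $\bigcap_n\bigcup_{i\ge n}\Gamma_i=\{e\}$, and $f\in\mathbb{Z}\Gamma$ well-balanced. Then $$h_\Sigma(\mathcal F_f,\Gamma)\le\limsup_{n\to\infty}[\Gamma:\Gamma_n]^{-1}\log\tau(C_n^f).$$
   Context: Well-balanced: $\sum_sf_s=0$, $f_s\le0$ for $s\ne e$, $f_s=f_{s^{-1}}$, support generates $\Gamma$. $C(\Gamma,f)$: vertex set $\Gamma$, $|f_s|$ edges joining $v$ and $vs$ for each $v$, $s\ne e$. $C_n^f$: quotient of $C(\Gamma,f)$ by the left $\Gamma_n$-action; $\tau$ = number of spanning trees. $S=\{s\ne e:f_s\ne0\}$; $S_*$ = set of edges of $C(\Gamma,f)$ with endpoint $e$; $p(s_* )=g$ if $s_*$ has endpoints $\{e,g\}$; $s_*^{-1}:=s^{-1}s_*$ where $s=p(s_* )$. $\mathcal F_f\subset S_*^\Gamma$ is the set of $y$ with (1) $y_g=s_*$, $p(s_* )=s$ implies $y_{gs}\ne s_*^{-1}$; (2) no $g_1,\dots,g_n\in\Gamma$, $s_i\in S$ with $g_is_i=g_{i+1}$, $g_1=g_n$, $p(y_{g_i})=s_i$ for $1\le i\le n-1$. Γ acts by the shift $(sy)_t=y_{s^{-1}t}$. Topological sofic entropy $h_\Sigma$: for a dynamically generating continuous pseudometric $\rho$ (e.g. $\rho(x,y)=1$ if $x_e\ne y_e$, else $0$), $h_\Sigma=\sup_\varepsilon\inf_W\inf_\delta\limsup_n[\Gamma:\Gamma_n]^{-1}\log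 N_\varepsilon(\mathrm{Map}(W,\delta,\Gamma_n),\rho_\infty)$ with $\mathrm{Map}(W,\delta,\Gamma_n)$ the maps $\varphi:\Gamma/\Gamma_n\to X$ satisfying $\big([\Gamma:\Gamma_n]^{-1}\sum_{g\Gamma_n}\rho(\varphi(sg\Gamma_n),s\varphi(g\Gamma_n))^2\big)^{1/2}\le\delta$ for all $s\in W$, $N_\varepsilon$ the max size of an $\varepsilon$-separated set; independent of $\rho$ and unchanged with $\rho_2$ in place of $\rho_\infty$. *)

(* Defs.v *)
From Stdlib Require Import Reals List Arith ZArith Classical ClassicalEpsilon.
Import ListNotations.
Set Implicit Arguments.
Unset Strict Implicit.

Record group := Group {
  gcar :> Type;
  gmul : gcar -> gcar -> gcar;
  ginv : gcar -> gcar;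
  gone : gcar;
  gmulA : forall x y z, gmul x (gmul y z) = gmul (gmul x y) z;
  gmul1l : forall x, gmul gone x = x;
  gmul1r : forall x, gmul x gone = x;
  gmulVl : forall x, gmul (ginv x) x = gone;
  gmulVr : forall x, gmul x (ginv x) = gone }.

Arguments gmul {g}.
Arguments ginv {g}.
Arguments gone {g}.

Definition countably_infinite (G : group) : Prop :=
  exists en : nat -> G, (forall m n, en m = en n -> m = n) /\ (forall g, exists n, en n = g).

Definition normal_subgroup (G : group) (H : G -> Prop) : Prop :=
  H gone /\ (forall x y, H x -> H y -> H (gmul x y)) /\ (forall x, H x -> H (ginv x)) /\
  (forall g x, H x -> H (gmul (gmul g x) (ginv g))).

Definition transversal (G : group) (H : G -> Prop) (R : list G) : Prop :=
  (forall g, exists r, In r R /\ H (gmul (ginv r) g)) /\ NoDup R /\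
  (forall r r', In r R -> In r' R -> H (gmul (ginv r) r') -> r = r').

Definition finite_index (G : group) (H : G -> Prop) : Prop := exists R, transversal H R.

(* a chosen transversal, the index [G:H], and the coset index map G -> {0..index-1} *)
Definition reps (G : group) (H : G -> Prop) : list G := epsilon (inhabits []) (transversal H).
Definition index (G : group) (H : G -> Prop) : nat := length (reps H).
Definition rep (G : group) (H : G -> Prop) (i : nat) : G := nth i (reps H) gone.
Definition cidx (G : group) (H : G -> Prop) (g : G) : nat :=
  epsilon (inhabits 0%nat) (fun i => (i < index H)%nat /\ H (gmul (ginv (rep H i)) g)).

Inductive generated (G : group) (P : G -> Prop) : G -> Prop :=
| gen_one : generated P gone
| gen_mul : forall g s, generated P g -> P s -> generated P (gmul g s)
| gen_mulV : forall g s, generated P g -> P s -> generated P (gmul g (ginv s)).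

Definition well_balanced (G : group) (f : G -> Z) : Prop :=
  (exists L : list G, NoDup L /\ (forall s, f s <> 0%Z -> In s L) /\
      fold_right Z.add 0%Z (map f L) = 0%Z) /\
  (forall s, s <> gone -> (f s <= 0)%Z) /\
  (forall s, f s = f (ginv s)) /\
  (forall g, generated (fun s => f s <> 0%Z) g).

(* S_* : edges of C(Gamma,f) at e, labelled (s,k) = k-th edge joining e and s,
   with p(s,k) = s and (s,k)^{-1} = (s^{-1},k). *)
Definition in_Sstar (G : group) (f : G -> Z) (x : G * nat) : Prop :=
  fst x <> gone /\ f (fst x) <> 0%Z /\ (snd x < Z.abs_nat (f (fst x)))%nat.

Definition Ff (G : group) (f : G -> Z) (y : G -> G * nat) : Prop :=
  (forall g, in_Sstar f (y g)) /\
  (forall g, y (gmul g (fst (y g))) <> (ginv (fst (y g)), snd (y g))) /\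
  ~ (exists (gs : nat -> G) (m : nat), (1 <= m)%nat /\ gs m = gs 0%nat /\
        forall i, (i < m)%nat -> gs (S i) = gmul (gs i) (fst (y (gs i)))).

Inductive Rbar := Fin (x : R) | PInf | MInf.

Definition Rbar_le (x y : Rbar) : Prop :=
  match x, y with
  | MInf, _ => True
  | _, PInf => True
  | Fin a, Fin b => (a <= b)%R
  | _, _ => False
  end.

Definition is_sup (P : Rbar -> Prop) (l : Rbar) : Prop :=
  (forall x, P x -> Rbar_le x l) /\ (forall u, (forall x, P x -> Rbar_le x u) -> Rbar_le l u).
Definition is_inf (P : Rbar -> Prop) (l : Rbar) : Prop :=
  (forall x, P x -> Rbar_le l x) /\ (forall u, (forall x, P x -> Rbar_le u x) -> Rbar_le u l).
Definition Rbar_sup (P : Rbar -> Prop) : Rbar := epsilon (inhabits MInf) (is_sup P).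
Definition Rbar_inf (P : Rbar -> Prop) : Rbar := epsilon (inhabits MInf) (is_inf P).
Definition Rbar_limsup (a : nat -> Rbar) : Rbar :=
  Rbar_inf (fun l => exists N, l = Rbar_sup (fun x => exists n, (N <= n)%nat /\ x = a n)).

(* log of a natural number, log 0 = -infinity *)
Definition Rbar_lognat (n : nat) : Rbar :=
  match n with O => MInf | _ => Fin (ln (INR n)) end.
Definition Rbar_scale (c : R) (x : Rbar) : Rbar :=
  match x with Fin a => Fin (c * a) | v => v end.

Section Entropy.
Variables (G : group) (A : Type).

Definition rho (x y : G -> A) : R :=
  if excluded_middle_informative (x gone = y gone) then 0%R else 1%R.

Definition shift (s : G) (y : G -> A) : G -> A := fun t => y (gmul (ginv s) t).

(* maps Gamma/Gamma_n -> X, cosets indexed by 0..index-1 via cidx *)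
Definition in_Map (X : (G -> A) -> Prop) (H : G -> Prop) (W : list G) (delta : R)
    (phi : nat -> G -> A) : Prop :=
  (forall i, (i < index H)%nat -> X (phi i)) /\
  forall s, In s W ->
    (sqrt (/ INR (index H) *
       fold_right Rplus 0%R
         (map (fun i => (rho (phi (cidx H (gmul s (rep H i)))) (shift s (phi i))) ^ 2)
              (seq 0 (index H)))) <= delta)%R.

Definition rho_inf (H : G -> Prop) (phi psi : nat -> G -> A) : R :=
  fold_right Rmax 0%R (map (fun i => rho (phi i) (psi i)) (seq 0 (index H))).

Definition separated (H : G -> Prop) (eps : R) (F : list (nat -> G -> A)) : Prop :=
  forall d i j, (i < length F)%nat -> (j < length F)%nat -> i <> j ->
    (eps <= rho_inf H (nth i F d) (nth j F d))%R.

Definition logN (X : (G -> A) -> Prop) (H : G -> Prop) (eps : R) (W : list G) (delta : R) : Rbar :=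
  Rbar_sup (fun v => exists F : list (nat -> G -> A),
     (forall phi, In phi F -> in_Map X H W delta phi) /\ separated H eps F /\
     v = Rbar_lognat (length F)).

Definition sofic_entropy (Gs : nat -> G -> Prop) (X : (G -> A) -> Prop) : Rbar :=
  Rbar_sup (fun v => exists eps, (0 < eps)%R /\
    v = Rbar_inf (fun u => exists W : list G,
      u = Rbar_inf (fun w => exists delta, (0 < delta)%R /\
        w = Rbar_limsup (fun n =>
              Rbar_scale (/ INR (index (Gs n))) (logN X (Gs n) eps W delta))))).
End Entropy.

Section Tree.
Variables (G : group) (H : G -> Prop) (f : G -> Z).

Definition suppL : list G :=
  epsilon (inhabits []) (fun L => NoDup L /\ forall s, In s L <-> (s <> gone /\ f s <> 0%Z)).

(* half-edge (i,(s,k)) = class of the edge (rep i, (s,k)) of C(Gamma,f), oriented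
   from vertex i to vertex cidx (rep i * s); it is the same edge as its partner. *)
Definition halfedge := (nat * (G * nat))%type.
Definition hsrc (h : halfedge) : nat := fst h.
Definition htgt (h : halfedge) : nat := cidx H (gmul (rep H (fst h)) (fst (snd h))).
Definition partner (h : halfedge) : halfedge := (htgt h, (ginv (fst (snd h)), snd (snd h))).

Definition halfedges : list halfedge :=
  flat_map (fun i => flat_map (fun s => map (fun k => (i, (s, k))) (seq 0 (Z.abs_nat (f s))))
                               suppL) (seq 0 (index H)).

Fixpoint walk (T : list halfedge) (i : nat) (w : list halfedge) (j : nat) : Prop :=
  match w with
  | [] => i = j
  | h :: w' => In h T /\ hsrc h = i /\ walk T (htgt h) w' j
  end.

Definition closed_sel (T : list halfedge) : Prop := forall h, In h T -> In (partner h) T.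

Definition connected_sel (T : list halfedge) : Prop :=
  forall i j, (i < index H)%nat -> (j < index H)%nat -> exists w, walk T i w j.

Definition acyclic_sel (T : list halfedge) : Prop :=
  ~ (exists (v : nat) (c : list halfedge), c <> [] /\ walk T v c v /\
       forall d t u, (t < length c)%nat -> (u < length c)%nat -> t <> u ->
         nth t c d <> nth u c d /\ nth t c d <> partner (nth u c d)).

Definition spanning_tree (T : list halfedge) : Prop :=
  closed_sel T /\ connected_sel T /\ acyclic_sel T.

Fixpoint sublists {B : Type} (l : list B) : list (list B) :=
  match l with
  | [] => [[]]
  | x :: l' => let r := sublists l' in map (cons x) r ++ r
  end.

Definition count_prop {B : Type} (P : B -> Prop) (l : list B) : nat :=
  length (filter (fun x => if excluded_middle_informative (P x) then true else false) l).

Definition tau : nat := count_prop spanning_tree (sublists halfedges).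
End Tree.

(* Main.v *)
From Pilot Require Import Defs.
From Stdlib Require Import Reals List Arith ZArith Lra Lia Classical ClassicalEpsilon.
Import ListNotations.
Section RbarPart.
Local Open Scope R_scope.

Lemma Rbar_le_PInf x : Rbar_le x PInf.
Proof. destruct x; simpl; auto. Qed.
Lemma Rbar_le_MInf x : Rbar_le MInf x.
Proof. destruct x; simpl; auto. Qed.

Lemma Rbar_le_trans x y z : Rbar_le x y -> Rbar_le y z -> Rbar_le x z.
Proof. destruct x, y, z; simpl; intros; try lra; auto; contradiction. Qed.

Lemma sup_ex (P : Rbar -> Prop) : exists l, is_sup P l.
Proof.
  destruct (classic (P PInf)) as [HP|HP].
  { exists PInf; split. intros; apply Rbar_le_PInf.
    intros u Hu; apply Hu in HP; destruct u; simpl in *; auto. }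
  set (E := fun r => P (Fin r)).
  destruct (classic (exists r, E r)) as [[r0 Hr0]|HE].
  - destruct (classic (bound E)) as [Hb|Hb].
    + destruct (completeness E Hb (ex_intro _ r0 Hr0)) as [m [Hm1 Hm2]].
      exists (Fin m); split.
      * intros [a| |] Ha; simpl; auto; try (apply Hm1; exact Ha); try contradiction.
      * intros [a| |] Hu; simpl; auto.
        -- apply Hm2; intros r Hr; apply (Hu (Fin r) Hr).
        -- apply (Hu (Fin r0) Hr0).
    + exists PInf; split. intros; apply Rbar_le_PInf.
      intros [a| |] Hu; simpl; auto.
      * apply Hb; exists a; intros r Hr; apply (Hu (Fin r) Hr).
      * apply (Hu (Fin r0) Hr0).
  - exists MInf; split.
    + intros [a| |] Ha; simpl; auto. apply HE; exists a; exact Ha.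
    + intros; apply Rbar_le_MInf.
Qed.

Lemma inf_ex (P : Rbar -> Prop) : exists l, is_inf P l.
Proof.
  destruct (classic (P MInf)) as [HP|HP].
  { exists MInf; split. intros; apply Rbar_le_MInf.
    intros u Hu; apply Hu in HP; destruct u; simpl in *; auto. }
  set (E := fun r => P (Fin (- r))).
  destruct (classic (exists r, E r)) as [[r0 Hr0]|HE].
  - destruct (classic (bound E)) as [Hb|Hb].
    + destruct (completeness E Hb (ex_intro _ r0 Hr0)) as [m [Hm1 Hm2]].
      exists (Fin (- m)); split.
      * intros [a| |] Ha; simpl; auto; try contradiction.
        assert (a = - - a) by ring. rewrite H in Ha.
        specialize (Hm1 (- a) Ha). lra.
      * intros [a| |] Hu; simpl; auto.
        -- assert (- a >= m). { apply Rle_ge, Hm2; intros r Hr. specialize (Hu _ Hr); simpl in Hu; lra. }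
           lra.
        -- apply (Hu (Fin (- r0)) Hr0).
    + exists MInf; split. intros; apply Rbar_le_MInf.
      intros [a| |] Hu; simpl; auto.
      * apply Hb; exists (- a); intros r Hr. specialize (Hu _ Hr); simpl in Hu; lra.
      * apply (Hu (Fin (- r0)) Hr0).
  - exists PInf; split.
    + intros [a| |] Ha; simpl; auto. apply HE; exists (- a).
      unfold E. replace (- - a) with a by ring. exact Ha.
    + intros; apply Rbar_le_PInf.
Qed.

Lemma sup_spec P : is_sup P (Rbar_sup P).
Proof. unfold Rbar_sup. apply epsilon_spec. apply sup_ex. Qed.
Lemma inf_spec P : is_inf P (Rbar_inf P).
Proof. unfold Rbar_inf. apply epsilon_spec. apply inf_ex. Qed.

Lemma sup_le P u : (forall x, P x -> Rbar_le x u) -> Rbar_le (Rbar_sup P) u.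
Proof. intros; apply (proj2 (sup_spec P)); auto. Qed.
Lemma le_sup P x : P x -> Rbar_le x (Rbar_sup P).
Proof. intros; apply (proj1 (sup_spec P)); auto. Qed.
Lemma inf_le P x : P x -> Rbar_le (Rbar_inf P) x.
Proof. intros; apply (proj1 (inf_spec P)); auto. Qed.
Lemma le_inf P u : (forall x, P x -> Rbar_le u x) -> Rbar_le u (Rbar_inf P).
Proof. intros; apply (proj2 (inf_spec P)); auto. Qed.

Definition Rbar_lt (x y : Rbar) : Prop := ~ Rbar_le y x.

Lemma le_approx a b : (forall c, Rbar_lt b (Fin c) -> Rbar_le a (Fin c)) -> Rbar_le a b.
Proof.
  intros H. unfold Rbar_lt in H. destruct b as [r| |]; [|apply Rbar_le_PInf|].
  - destruct a as [a| |]; simpl; auto.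
    + destruct (Rle_dec a r); auto.
      specialize (H ((a + r)/2)). simpl in H. assert (~ (a + r)/2 <= r) by lra.
      assert (Hh := H H0). lra.
    + apply (H (r + 1)); simpl; lra.
  - destruct a as [a| |]; simpl; auto.
    + assert (Hh := H (a - 1) (fun x => x)). simpl in Hh; lra.
    + exact (H 0 (fun x => x)).
Qed.

Lemma inf_lt P c : Rbar_lt (Rbar_inf P) (Fin c) -> exists x, P x /\ Rbar_lt x (Fin c).
Proof.
  intros H. apply NNPP; intro Hn. apply H. apply le_inf. intros x Hx.
  apply NNPP; intro Hx'. apply Hn. exists x; split; auto.
Qed.

Lemma lt_between b c : Rbar_lt b (Fin c) -> exists c', Rbar_lt b (Fin c') /\ c' < c.
Proof.
  intros H. destruct b as [r| |]; unfold Rbar_lt in *; simpl in *.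
  - exists ((r + c)/2). split; lra.
  - exfalso; auto.
  - exists (c - 1); split; auto; lra.
Qed.

End RbarPart.


Section Grp.
Variable G : group.

Lemma inv_unique (x y : G) : gmul x y = gone -> ginv x = y.
Proof.
  intros H. rewrite <- (gmul1r (ginv x)). rewrite <- H. rewrite gmulA, gmulVl, gmul1l. reflexivity.
Qed.
Lemma ginv_ginv (a : G) : ginv (ginv a) = a.
Proof. apply inv_unique. apply gmulVl. Qed.
Lemma ginv_one : ginv (@gone G) = gone.
Proof. apply inv_unique. apply gmul1l. Qed.
Lemma ginv_mul (a b : G) : ginv (gmul a b) = gmul (ginv b) (ginv a).
Proof.
  apply inv_unique. rewrite <- gmulA, (gmulA b), gmulVr, gmul1l, gmulVr. reflexivity.
Qed.
Lemma mulKV (x y : G) : gmul (ginv x) (gmul x y) = y.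
Proof. rewrite gmulA, gmulVl, gmul1l; reflexivity. Qed.
Lemma mulVK (x y : G) : gmul x (gmul (ginv x) y) = y.
Proof. rewrite gmulA, gmulVr, gmul1l; reflexivity. Qed.
Lemma ginv_inj (x y : G) : ginv x = ginv y -> x = y.
Proof. intros H. rewrite <- (ginv_ginv x), H, ginv_ginv. reflexivity. Qed.

Variable H : G -> Prop.
Hypothesis Hn : normal_subgroup H.
Hypothesis Hf : finite_index H.

Lemma H1 : H gone. Proof. apply Hn. Qed.
Lemma Hmul x y : H x -> H y -> H (gmul x y). Proof. apply Hn. Qed.
Lemma Hinv x : H x -> H (ginv x). Proof. apply Hn. Qed.
Lemma Hconj g x : H x -> H (gmul (gmul g x) (ginv g)). Proof. apply Hn. Qed.

Definition ceq (a b : G) := H (gmul (ginv a) b).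
Lemma ceq_refl a : ceq a a. Proof. unfold ceq; rewrite gmulVl; apply H1. Qed.
Lemma ceq_sym a b : ceq a b -> ceq b a.
Proof. unfold ceq; intros h. apply Hinv in h. rewrite ginv_mul, ginv_ginv in h. exact h. Qed.
Lemma ceq_trans a b c : ceq a b -> ceq b c -> ceq a c.
Proof.
  unfold ceq; intros h1 h2. assert (h := Hmul _ _ h1 h2).
  rewrite <- gmulA, mulVK in h. exact h.
Qed.
Lemma ceq_mull c a b : ceq a b -> ceq (gmul c a) (gmul c b).
Proof. unfold ceq; intros h. rewrite ginv_mul, <- gmulA, mulKV. exact h. Qed.
Lemma ceq_mulr c a b : ceq a b -> ceq (gmul a c) (gmul b c).
Proof.
  unfold ceq; intros h. apply (Hconj (ginv c)) in h. rewrite ginv_ginv in h.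
  rewrite ginv_mul. rewrite <- !gmulA in h. rewrite <- !gmulA. exact h.
Qed.
Lemma ceq_inv a b : ceq a b -> ceq (ginv a) (ginv b).
Proof.
  unfold ceq; intros h. apply (Hconj a) in h. rewrite ginv_ginv.
  rewrite mulVK in h. apply Hinv in h. rewrite ginv_mul, ginv_ginv in h. exact h.
Qed.

Lemma reps_spec : transversal H (reps H).
Proof. unfold reps. apply epsilon_spec. exact Hf. Qed.

Lemma index_pos : (0 < index H)%nat.
Proof.
  destruct reps_spec as [h1 _]. destruct (h1 gone) as [r [hr _]].
  unfold index. destruct (reps H); [inversion hr | simpl; lia].
Qed.

Lemma rep_in i : (i < index H)%nat -> In (rep H i) (reps H).
Proof. intros h. unfold rep. apply nth_In. exact h. Qed.

Lemma in_reps r : In r (reps H) -> exists i, (i < index H)%nat /\ rep H i = r.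
Proof.
  intros h. destruct (In_nth _ _ gone h) as [i [hi e]]. exists i; split; auto.
Qed.

Lemma rep_inj i j : (i < index H)%nat -> (j < index H)%nat -> rep H i = rep H j -> i = j.
Proof.
  intros hi hj e. destruct reps_spec as [_ [hnd _]].
  eapply NoDup_nth; eauto.
Qed.

Lemma cidx_spec g : (cidx H g < index H)%nat /\ ceq (rep H (cidx H g)) g.
Proof.
  unfold cidx. apply epsilon_spec.
  destruct reps_spec as [h1 _]. destruct (h1 g) as [r [hr hg]].
  destruct (in_reps r hr) as [i [hi e]]. exists i. subst r. split; auto.
Qed.
Lemma cidx_lt g : (cidx H g < index H)%nat. Proof. apply cidx_spec. Qed.

Lemma reps_eq i j : (i < index H)%nat -> (j < index H)%nat -> ceq (rep H i) (rep H j) -> i = j.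
Proof.
  intros hi hj h. destruct reps_spec as [_ [_ h3]].
  apply rep_inj; auto. apply h3; auto using rep_in.
Qed.

Lemma cidx_eq a b : ceq a b -> cidx H a = cidx H b.
Proof.
  intros h. destruct (cidx_spec a) as [ha1 ha2]. destruct (cidx_spec b) as [hb1 hb2].
  apply reps_eq; auto. eapply ceq_trans; [exact ha2|]. eapply ceq_trans; [exact h|].
  apply ceq_sym; exact hb2.
Qed.

Lemma cidx_eq_inv a b : cidx H a = cidx H b -> ceq a b.
Proof.
  intros e. destruct (cidx_spec a) as [_ ha]. destruct (cidx_spec b) as [_ hb].
  rewrite e in ha. eapply ceq_trans; [apply ceq_sym; exact ha| exact hb].
Qed.

Lemma cidx_rep i : (i < index H)%nat -> cidx H (rep H i) = i.
Proof.
  intros hi. destruct (cidx_spec (rep H i)) as [h1 h2]. apply reps_eq; auto.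
Qed.

Lemma rep_cidx b : ceq (rep H (cidx H b)) b.
Proof. apply cidx_spec. Qed.

Lemma cidx_mulr a b : cidx H (gmul (rep H (cidx H b)) a) = cidx H (gmul b a).
Proof. apply cidx_eq, ceq_mulr, rep_cidx. Qed.
Lemma cidx_mull a b : cidx H (gmul a (rep H (cidx H b))) = cidx H (gmul a b).
Proof. apply cidx_eq, ceq_mull, rep_cidx. Qed.
Lemma cidx_invc b : cidx H (ginv (rep H (cidx H b))) = cidx H (ginv b).
Proof. apply cidx_eq, ceq_inv, rep_cidx. Qed.

Definition iota (v : nat) : nat := cidx H (ginv (rep H v)).
Lemma iota_lt v : (iota v < index H)%nat. Proof. apply cidx_lt. Qed.
Lemma iota_iota v : (v < index H)%nat -> iota (iota v) = v.
Proof. intros hv. unfold iota. rewrite cidx_invc, ginv_ginv, cidx_rep; auto. Qed.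
Lemma iota_step v s :
  iota (cidx H (gmul (rep H v) s)) = cidx H (gmul (ginv s) (rep H (iota v))).
Proof.
  unfold iota. rewrite cidx_invc, cidx_mull, ginv_mul. reflexivity.
Qed.

End Grp.


Section Core.
Variable G : group.
Variable H : G -> Prop.
Variable f : G -> Z.
Notation N := (index H).
Notation hs := (halfedges H f).
Notation hE := (halfedge G).
Notation tgt := (htgt H).
Notation prt := (partner H).

Hypothesis Hnd : NoDup hs.
Hypothesis Hsrc : forall h, In h hs -> (hsrc h < N)%nat.
Hypothesis Htgt : forall h, In h hs -> (tgt h < N)%nat.
Hypothesis Hpin : forall h, In h hs -> In (prt h) hs.
Hypothesis Hptgt : forall h, In h hs -> tgt (prt h) = hsrc h.
Hypothesis Hpp : forall h, In h hs -> prt (prt h) = h.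
Hypothesis Hconn : forall i j, (i < N)%nat -> (j < N)%nat -> exists w, walk H hs i w j.

Lemma hdec (x y : hE) : {x = y} + {x <> y}.
Proof. apply excluded_middle_informative. Qed.

Lemma psrc h : hsrc (prt h) = tgt h.
Proof. reflexivity. Qed.

Lemma walk_app T a w1 b w2 c : walk H T a w1 b -> walk H T b w2 c -> walk H T a (w1 ++ w2) c.
Proof.
  revert a; induction w1 as [|x w1 IH]; simpl; intros a h1 h2.
  - subst; auto.
  - destruct h1 as [? [? ?]]; repeat split; auto; eapply IH; eauto.
Qed.

Lemma walk_incl T T' a w b : (forall h, In h w -> In h T -> In h T') -> walk H T a w b -> walk H T' a w b.
Proof.
  revert a; induction w as [|x w IH]; simpl; intros a hi h; auto.
  destruct h as [? [? ?]]; repeat split; auto.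
Qed.

Lemma walk_in T a w b h : walk H T a w b -> In h w -> In h T.
Proof.
  revert a; induction w as [|x w IH]; simpl; intros a hw hi; [contradiction|].
  destruct hw as [? [? ?]]. destruct hi; subst; eauto.
Qed.

Lemma walk_rev T a w b : (forall h, In h T -> In h hs) -> (forall h, In h T -> In (prt h) T) ->
  walk H T a w b -> exists w', walk H T b w' a.
Proof.
  intros hT hc. revert a; induction w as [|x w IH]; simpl; intros a hw.
  - subst; exists []; simpl; auto.
  - destruct hw as [hx [hs' hw]]. destruct (IH _ hw) as [w' hw'].
    exists (w' ++ [prt x]). eapply walk_app; [exact hw'|]. simpl.
    repeat split; auto. rewrite Hptgt; auto.
Qed.

Lemma walk_pres (rt : nat -> nat) T a w b : (forall h, In h w -> rt (hsrc h) = rt (tgt h)) ->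
  walk H T a w b -> rt a = rt b.
Proof.
  revert a; induction w as [|x w IH]; simpl; intros a hp hw; [subst; auto|].
  destruct hw as [_ [<- hw]]. rewrite hp by auto. apply (IH _); auto.
Qed.

Lemma walk_change (rt : nat -> nat) T a w b : walk H T a w b -> rt a <> rt b ->
  exists h, In h w /\ rt (hsrc h) <> rt (tgt h).
Proof.
  intros hw hn. apply NNPP; intro hc. apply hn. eapply walk_pres; [|exact hw].
  intros h hi. apply NNPP; intro hne. apply hc; eauto.
Qed.

Lemma walk_except (rt : nat -> nat) T a c b d t : walk H T a c b -> (t < length c)%nat ->
  (forall u, (u < length c)%nat -> u <> t -> rt (hsrc (nth u c d)) = rt (tgt (nth u c d))) ->
  rt a = rt (hsrc (nth t c d)) /\ rt (tgt (nth t c d)) = rt b.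
Proof.
  revert a t; induction c as [|x c IH]; simpl; intros a t hw ht hu; [lia|].
  destruct hw as [hx [hsx hw]]. destruct t as [|t].
  - subst a; split; auto. eapply walk_pres; [|exact hw].
    intros h hi. destruct (In_nth _ _ d hi) as [u [hu1 hu2]].
    specialize (hu (S u)). simpl in hu. rewrite <- hu2. apply hu; lia.
  - assert (e0 : rt a = rt (tgt x)). { subst a. apply (hu 0%nat); simpl; lia. }
    destruct (IH (tgt x) t hw ltac:(lia)) as [h1 h2].
    + intros u hu1 hu2. apply (hu (S u)); simpl; lia.
    + split; congruence.
Qed.

Lemma walk_ext T T' a w b : (forall h, In h T <-> In h T') -> walk H T a w b -> walk H T' a w b.
Proof. intros he. apply walk_incl. intros; apply he; auto. Qed.

Lemma spanning_ext T T' : (forall h, In h T <-> In h T') -> spanning_tree H T -> spanning_tree H T'.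
Proof.
  intros he [hc [hco ha]]. split; [|split].
  - intros h hh. apply he, hc, he, hh.
  - intros i j hi hj. destruct (hco i j hi hj) as [w hw]. exists w. eapply walk_ext; eauto.
  - intros [v [c [hne [hw hd]]]]. apply ha. exists v, c. split; auto. split; auto.
    eapply walk_ext; [|exact hw]. intros h; split; apply he.
Qed.

Lemma NoDup_remove' (l : list nat) x : NoDup l -> NoDup (remove Nat.eq_dec x l).
Proof.
  induction l as [|y l IH]; simpl; intros hn; auto.
  inversion hn; subst. destruct (Nat.eq_dec x y); auto. constructor; auto.
  intro hi. apply in_remove in hi. tauto.
Qed.

Definition Inv (E : list hE) (R : list nat) (rt : nat -> nat) : Prop :=
  (forall h, In h E -> In h hs) /\
  (forall h, In h E -> In (prt h) E) /\
  (forall v, (v < N)%nat -> In (rt v) R) /\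
  (forall v, (v < N)%nat -> exists w, walk H E v w (rt v)) /\
  (forall h, In h E -> rt (hsrc h) = rt (tgt h)) /\
  (forall r, In r R -> rt r = r /\ (r < N)%nat) /\
  acyclic_sel H E /\ NoDup R.

Lemma acyc_add (E : list hE) (rt : nat -> nat) (h : hE) : (forall x, In x E -> rt (hsrc x) = rt (tgt x)) -> acyclic_sel H E ->
  In h hs -> rt (hsrc h) <> rt (tgt h) -> acyclic_sel H (h :: prt h :: E).
Proof.
  intros hE ha hh hne [v [c [hc [hw hd]]]].
  destruct (classic (exists t, (t < length c)%nat /\ (nth t c h = h \/ nth t c h = prt h))) as
    [[t [ht hth]]|hno].
  - assert (hu : forall u, (u < length c)%nat -> u <> t ->
              rt (hsrc (nth u c h)) = rt (tgt (nth u c h))).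
    { intros u hu hut. apply hE. destruct (hd h u t hu ht hut) as [d1 d2].
      assert (hin := walk_in _ _ _ _ _ hw (nth_In c h hu)). simpl in hin.
      destruct hin as [e|[e|e]]; auto.
      - exfalso. destruct hth as [e'|e']; rewrite e' in *; [congruence|]. rewrite Hpp in d2; auto.
      - exfalso. destruct hth as [e'|e']; rewrite e' in *; congruence. }
    destruct (walk_except rt _ _ _ _ h t hw ht hu) as [e1 e2].
    destruct hth as [e|e]; rewrite e in *; [congruence|].
    rewrite psrc in e1. rewrite Hptgt in e2; auto. congruence.
  - apply ha. exists v, c. split; auto. split; auto.
    eapply walk_incl; [|exact hw]. intros x hx hin. simpl in hin.
    destruct (In_nth _ _ h hx) as [t [ht e]].
    destruct hin as [e'|[e'|e']]; auto; exfalso; apply hno; exists t; split; auto; first [left; congruence | right; congruence].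
Qed.

Lemma extend (n : nat) : forall E R rt, length R = S n -> Inv E R rt ->
  exists Ef Aadd, spanning_tree H Ef /\
    (forall x, In x Ef <-> In x E \/ exists y, In y Aadd /\ (x = y \/ x = prt y)) /\
    (forall x, In x E -> ~ In x Aadd /\ ~ In (prt x) Aadd) /\
    (forall y, In y Aadd -> In y hs) /\
    (length Aadd <= n)%nat.
Proof.
  induction n as [|n IH]; intros E R rt hl [i1 [i2 [i3 [i4 [i5 [i6 [i8 i9]]]]]]].
  - exists E, []. destruct R as [|r [|]]; simpl in hl; try lia.
    split; [|split; [|split; [|split]]]; simpl; auto;
      try (intros x; split; auto; intros [?|[y [[] _]]]; auto; fail).
    split; auto. split; auto. intros i j hi hj.
      destruct (i4 i hi) as [w1 hw1]. destruct (i4 j hj) as [w2 hw2].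
      destruct (walk_rev _ _ _ _ i1 i2 hw2) as [w3 hw3].
      assert (rt i = r) by (destruct (i3 i hi); auto; contradiction).
      assert (rt j = r) by (destruct (i3 j hj); auto; contradiction).
      exists (w1 ++ w3). eapply walk_app; [exact hw1|]. congruence.
    all: intros; contradiction.
  - destruct R as [|r1 [|r2 R]]; simpl in hl; try lia.
    destruct (i6 r1 ltac:(simpl; auto)) as [e1 hr1].
    destruct (i6 r2 ltac:(simpl; auto)) as [e2 hr2].
    assert (hne : r1 <> r2).
    { inversion i9 as [|? ? hn1 _]. intro e; apply hn1; subst; simpl; auto. }
    destruct (Hconn _ _ hr1 hr2) as [w hw].
    destruct (walk_change rt _ _ _ _ hw ltac:(congruence)) as [h [hin hch]].
    assert (hh : In h hs) by (eapply walk_in; eauto).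
    set (a := rt (hsrc h)). set (b := rt (tgt h)).
    set (rt' := fun x => if Nat.eq_dec (rt x) b then a else rt x).
    set (R' := remove Nat.eq_dec b (r1 :: r2 :: R)).
    assert (hbR : In b (r1 :: r2 :: R)) by (apply i3; auto).
    assert (haR : In a (r1 :: r2 :: R)) by (apply i3; auto).
    assert (hlR : length R' = S n).
    { assert (hlt := remove_length_lt Nat.eq_dec _ _ hbR).
      assert (hcount : (length (r1 :: r2 :: R) <= S (length R'))%nat).
      { clear -i9 hbR. unfold R'. generalize (r1 :: r2 :: R) i9 hbR. clear.
        induction l as [|y l IH]; simpl; intros hn hb; [contradiction|].
        inversion hn as [|? ? hn1 hn2]; subst. destruct (Nat.eq_dec b y) as [e|e].
        - subst. rewrite notin_remove; auto.
        - simpl. destruct hb as [hb|hb]; [congruence|]. specialize (IH hn2 hb). lia. }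
      simpl in *. unfold R' in *. lia. }
    assert (hE'1 : forall x, In x E -> rt (hsrc x) = rt (tgt x)) by auto.
    assert (hnotE : ~ In h E) by (intro hx; apply hch, i5, hx).
    assert (hnotpE : ~ In (prt h) E).
    { intro hx. apply hnotE. rewrite <- (Hpp h hh). apply i2, hx. }
    assert (Inv' : Inv (h :: prt h :: E) R' rt').
    { unfold Inv, rt', R'. split; [|split; [|split; [|split; [|split; [|split; [|split]]]]]].
      - intros x [e|[e|e]]; subst; auto.
      - intros x [e|[e|e]]; subst; simpl; auto. rewrite Hpp; auto.
      - intros v hv. destruct (Nat.eq_dec (rt v) b) as [e|e].
        + apply in_in_remove; auto.
        + apply in_in_remove; auto.
      - intros v hv. destruct (Nat.eq_dec (rt v) b) as [e|e].
        + destruct (i4 v hv) as [w1 hw1].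
          destruct (i4 (tgt h) (Htgt h hh)) as [w2 hw2].
          destruct (walk_rev _ _ _ _ i1 i2 hw2) as [w3 hw3].
          destruct (i4 (hsrc h) (Hsrc h hh)) as [w4 hw4].
          exists (w1 ++ w3 ++ prt h :: w4).
          assert (hsub : forall x y (w : list hE), walk H E x w y -> walk H (h :: prt h :: E) x w y).
          { intros. eapply walk_incl; [|eauto]. simpl; auto. }
          eapply walk_app; [apply hsub; exact hw1|]. rewrite e.
          eapply walk_app; [apply hsub; exact hw3|]. simpl. split; auto. split; auto.
          rewrite Hptgt; auto; apply hsub; exact hw4.
        + destruct (i4 v hv) as [w1 hw1]. exists w1. eapply walk_incl; [|exact hw1]. simpl; auto.
      - intros x [ex|[ex|ex]]; [subst x|subst x|].
        + fold a b. destruct (Nat.eq_dec a b); destruct (Nat.eq_dec b b); congruence.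
        + rewrite psrc, Hptgt; auto. fold a b.
          destruct (Nat.eq_dec a b); destruct (Nat.eq_dec b b); congruence.
        + rewrite (i5 x ex). reflexivity.
      - intros r hr. apply in_remove in hr. destruct hr as [hr hrb].
        destruct (i6 r hr) as [er hrN]. rewrite er.
        destruct (Nat.eq_dec r b); [congruence|]. auto.
      - apply (acyc_add E rt); auto.
      - apply NoDup_remove'; auto. }
    destruct (IH _ _ _ hlR Inv') as [Ef [Aadd [hsp [hmem [hdisj [hA hlA]]]]]].
    exists Ef, (h :: Aadd). split; auto. split; [|split; [|split]].
    + intros x. rewrite hmem. simpl. split.
      * intros [[e|[e|e]]|[y [hy e]]]; auto.
        -- right; exists h; auto.
        -- right; exists h; auto.
        -- right; exists y; auto.
      * intros [e|[y [[e|hy] e']]]; auto. subst y. destruct e'; auto.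
        right; exists y; auto.
    + intros x hx. simpl. split.
      * intros [e|e]; [subst; contradiction|]. exact (proj1 (hdisj x ltac:(simpl; auto)) e).
      * intros [e|e]. { apply hnotpE. rewrite e. rewrite Hpp; auto; apply i1; auto. }
        exact (proj2 (hdisj x ltac:(simpl; auto)) e).
    + intros y [e|e]; subst; auto.
    + simpl; lia.
Qed.


Definition nxt (sg : nat -> hE) (v : nat) : nat := tgt (sg v).
Definition it (sg : nat -> hE) (v t : nat) : nat := Nat.iter t (nxt sg) v.

Lemma it_S sg v t : it sg v (S t) = nxt sg (it sg v t).
Proof. reflexivity. Qed.
Lemma it_0 sg v : it sg v 0 = v.
Proof. reflexivity. Qed.
Lemma it_add sg v a b : it sg v (a + b) = it sg (it sg v a) b.
Proof.
  induction b as [|b IH]. - rewrite Nat.add_0_r; reflexivity.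
  - rewrite Nat.add_succ_r, !it_S, IH; reflexivity.
Qed.
Lemma it_S' sg v t : it sg v (S t) = it sg (nxt sg v) t.
Proof. change (S t) with (1 + t)%nat. rewrite it_add. reflexivity. Qed.

Definition sgok (sg : nat -> hE) := forall v, (v < N)%nat -> In (sg v) hs /\ hsrc (sg v) = v.

Lemma it_lt sg v t : sgok sg -> (v < N)%nat -> (it sg v t < N)%nat.
Proof.
  intros hs1 hv. induction t as [|t IH]; auto. rewrite it_S. unfold nxt.
  apply Htgt, hs1, IH.
Qed.

Definition Rel (sg : nat -> hE) (T A Sr : list hE) : Prop :=
  exists isr : nat -> Prop,
  (forall h, In h Sr <-> (In h hs /\ isr (hsrc h) /\ h = sg (hsrc h))) /\
  (forall h, (In h T /\ ~ In h A /\ ~ In (prt h) A) <->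
             (exists v, (v < N)%nat /\ ~ isr v /\ (h = sg v \/ h = prt (sg v)))) /\
  (forall v, (v < N)%nat -> exists t, isr (it sg v t)) /\
  (forall v w, (v < N)%nat -> (w < N)%nat -> ~ isr v -> ~ isr w -> sg w <> prt (sg v)).

Lemma decode sg sg' T A Sr : sgok sg -> sgok sg' -> Rel sg T A Sr -> Rel sg' T A Sr ->
  forall v, (v < N)%nat -> sg v = sg' v.
Proof.
  intros hs1 hs2 [isr [r1 [r2 [r3 r4]]]] [isr' [r1' [r2' [r3' r4']]]].
  assert (cl : forall v, (v < N)%nat -> isr v -> isr' v /\ sg v = sg' v).
  { intros v hv hi. destruct (hs1 v hv) as [hin hsv].
    assert (hS : In (sg v) Sr) by (apply r1; rewrite hsv; auto).
    apply r1' in hS. rewrite hsv in hS. tauto. }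
  intros v hv. apply NNPP; intro hne.
  assert (key : forall t, (it sg v t < N)%nat /\ ~ isr (it sg v t) /\ sg (it sg v t) <> sg' (it sg v t)).
  { induction t as [|t [hx1 [hx2 hx3]]].
    - rewrite it_0. split; auto. split; auto. intro hi. apply hne, (cl v hv hi).
    - set (x := it sg v t) in *.
      assert (hF : In (sg x) T /\ ~ In (sg x) A /\ ~ In (prt (sg x)) A).
      { apply r2. exists x; auto. }
      apply r2' in hF. destruct hF as [u [hu [hnu [e|e]]]].
      + exfalso. destruct (hs1 x hx1) as [_ h1]. destruct (hs2 u hu) as [_ h2].
        assert (u = x) by congruence. subst u. auto.
      + destruct (hs1 x hx1) as [hin1 h1]. destruct (hs2 u hu) as [hin2 h2].
        assert (ew : it sg v (S t) = u).
        { rewrite it_S. unfold nxt. fold x. rewrite e, Hptgt; auto. }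
        rewrite ew. split; auto. split.
        * intro hi. apply hnu, (cl u hu hi).
        * intro es. apply (r4 x u hx1 hu hx2).
          -- intro hi. apply hnu, (cl u hu hi).
          -- rewrite es, e, Hpp; auto. }
  destruct (r3 v hv) as [t ht]. apply (proj1 (proj2 (key t))), ht.
Qed.


Lemma NoDup_flat_map' {X Y : Type} (F : X -> list Y) (l : list X) :
  NoDup l -> (forall x, In x l -> NoDup (F x)) ->
  (forall x y z, In x l -> In y l -> x <> y -> In z (F x) -> ~ In z (F y)) ->
  NoDup (flat_map F l).
Proof.
  induction l as [|a l IH]; simpl; intros hn h1 h2; [constructor|].
  inversion hn as [|? ? hna hnl]; subst.
  apply NoDup_app; auto.
  - apply IH; auto. intros x y z hx hy; apply h2; auto.
  - intros z hz hz'. apply in_flat_map in hz'. destruct hz' as [y [hy hzy]].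
    apply (h2 a y z); auto. intro e; subst; contradiction.
Qed.

Lemma pigeon (g : nat -> nat) n : (forall i, (i <= n)%nat -> (g i < n)%nat) ->
  exists i j, (i < j)%nat /\ (j <= n)%nat /\ g i = g j.
Proof.
  intros hg. set (l := map g (seq 0 (S n))).
  assert (hnd : ~ NoDup l).
  { intro hn. assert (hi : incl l (seq 0 n)).
    { intros x hx. unfold l in hx. apply in_map_iff in hx. destruct hx as [i [<- hi]].
      apply in_seq in hi. apply in_seq. specialize (hg i ltac:(lia)). lia. }
    assert (h := NoDup_incl_length hn hi). unfold l in h. rewrite length_map, !length_seq in h. lia. }
  rewrite (NoDup_nth l 0) in hnd. apply not_all_ex_not in hnd. destruct hnd as [i hnd].
  apply not_all_ex_not in hnd. destruct hnd as [j hnd].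
  unfold l in hnd. rewrite length_map, length_seq in hnd.
  assert (hi : (i < S n)%nat) by (apply NNPP; intro; apply hnd; intros; lia).
  assert (hj : (j < S n)%nat) by (apply NNPP; intro; apply hnd; intros; lia).
  assert (he : nth i (map g (seq 0 (S n))) 0 = nth j (map g (seq 0 (S n))) 0).
  { apply NNPP; intro; apply hnd; intros; contradiction. }
  assert (hij : i <> j) by (intro; apply hnd; intros; auto).
  rewrite (nth_indep _ _ (g 0)) in he by (rewrite length_map, length_seq; lia).
  rewrite (nth_indep _ 0 (g 0)) in he by (rewrite length_map, length_seq; lia).
  rewrite !map_nth, !seq_nth in he by lia. simpl in he.
  destruct (Nat.lt_total i j) as [h|[h|h]]; [exists i, j| contradiction |exists j, i]; repeat split; try lia; auto.
Qed.

Lemma argmin (g : nat -> nat) p : (0 < p)%nat -> exists s0, (s0 < p)%nat /\ forall s, (s < p)%nat -> (g s0 <= g s)%nat.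
Proof.
  induction p as [|p IH]; intros hp; [lia|].
  destruct p as [|p]. { exists 0%nat; split; auto; intros s hs; assert (s = 0%nat) by lia; subst; auto. }
  destruct (IH ltac:(lia)) as [s0 [hs0 hm]].
  destruct (le_lt_dec (g s0) (g (S p))) as [h|h].
  - exists s0; split; [lia|]. intros s hs. destruct (Nat.eq_dec s (S p)); [subst; auto|]. apply hm; lia.
  - exists (S p); split; [lia|]. intros s hs. destruct (Nat.eq_dec s (S p)); [subst; auto|].
    specialize (hm s ltac:(lia)). lia.
Qed.

Lemma argmax (g : nat -> nat) p : (0 < p)%nat -> exists s0, (s0 < p)%nat /\ forall s, (s < p)%nat -> (g s <= g s0)%nat.
Proof.
  induction p as [|p IH]; intros hp; [lia|].
  destruct p as [|p]. { exists 0%nat; split; auto; intros s hs; assert (s = 0%nat) by lia; subst; auto. }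
  destruct (IH ltac:(lia)) as [s0 [hs0 hm]].
  destruct (le_lt_dec (g (S p)) (g s0)) as [h|h].
  - exists s0; split; [lia|]. intros s hs. destruct (Nat.eq_dec s (S p)); [subst; auto|]. apply hm; lia.
  - exists (S p); split; [lia|]. intros s hs. destruct (Nat.eq_dec s (S p)); [subst; auto|].
    specialize (hm s ltac:(lia)). lia.
Qed.

Lemma least (P : nat -> Prop) : (exists t, P t) -> exists t, P t /\ forall t', (t' < t)%nat -> ~ P t'.
Proof.
  intros [t ht]. induction t as [t IH] using lt_wf_ind.
  destruct (classic (exists t', (t' < t)%nat /\ P t')) as [[t' [h1 h2]]|hn].
  - apply (IH t' h1 h2).
  - exists t; split; auto. intros t' h1 h2; apply hn; eauto.
Qed.

Lemma filter_sublists {X : Type} (p : X -> bool) (l : list X) : In (filter p l) (sublists l).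
Proof.
  induction l as [|x l IH]; simpl; auto.
  destruct (p x); apply in_or_app; [left; apply in_map; auto | right; auto].
Qed.

Lemma count_or {X : Type} (P Q : X -> Prop) (l : list X) :
  (length (filter (fun x => if excluded_middle_informative (P x \/ Q x) then true else false) l) <=
   length (filter (fun x => if excluded_middle_informative (P x) then true else false) l) +
   length (filter (fun x => if excluded_middle_informative (Q x) then true else false) l))%nat.
Proof.
  induction l as [|x l IH]; simpl; auto.
  destruct (excluded_middle_informative (P x \/ Q x)) as [h|h];
  destruct (excluded_middle_informative (P x)); destruct (excluded_middle_informative (Q x));
  simpl; try lia; tauto.
Qed.

Definition bP {X : Type} (P : X -> Prop) : X -> bool :=
  fun x => if excluded_middle_informative (P x) then true else false.
Lemma bP_true {X : Type} (P : X -> Prop) x : bP P x = true <-> P x.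
Proof. unfold bP; destruct (excluded_middle_informative (P x)); split; intros; auto; congruence. Qed.

Section Fixed.
Variable sg : nat -> hE.
Hypothesis Hsg : sgok sg.
Variable good : nat -> Prop.
Variable L : nat.
Hypothesis HL : (2 <= L)%nat.
Hypothesis Hret : forall v, (v < N)%nat -> good v -> forall p, (1 <= p)%nat -> (p <= L)%nat -> it sg v p <> v.

Notation itv := (it sg).

Definition cyc (v : nat) : Prop := good v /\ exists p, (1 <= p)%nat /\ (p <= N)%nat /\ itv v p = v /\
  forall t, (t < p)%nat -> good (itv v t) /\ (v <= itv v t)%nat.
Definition isroot (v : nat) : Prop := ~ good v \/ cyc v.

Lemma it_period x p : itv x p = x -> forall q, itv x (q * p) = x.
Proof.
  intros hp q. induction q as [|q IH]; simpl; auto.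
  rewrite it_add, hp. exact IH.
Qed.
Lemma it_mod x p s : (1 <= p)%nat -> itv x p = x -> itv x s = itv x (s mod p).
Proof.
  intros h1 hp. rewrite (Nat.div_mod_eq s p) at 1.
  rewrite Nat.mul_comm, it_add, it_period; auto.
Qed.
Lemma nat_mod_lt s p : (1 <= p)%nat -> (s mod p < p)%nat.
Proof. intros; apply Nat.mod_upper_bound; lia. Qed.

Lemma reach v : (v < N)%nat -> exists t, isroot (itv v t).
Proof.
  intros hv. destruct (pigeon (itv v) N) as [i [j [hij [hjN he]]]].
  { intros; apply it_lt; auto. }
  destruct (classic (exists t, (t <= j)%nat /\ ~ good (itv v t))) as [[t [_ ht]]|hg].
  { exists t; left; auto. }
  assert (hg' : forall t, (t <= j)%nat -> good (itv v t)).
  { intros t ht; apply NNPP; intro; apply hg; eauto. }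
  set (x := itv v i). set (p := (j - i)%nat).
  assert (hxp : itv x p = x). { unfold x, p. rewrite <- it_add. replace (i + (j - i))%nat with j by lia. auto. }
  destruct (argmin (itv x) p ltac:(unfold p; lia)) as [s0 [hs0 hm]].
  exists (i + s0)%nat. right. rewrite it_add. fold x. split.
  { unfold x; rewrite <- it_add; apply hg'; unfold p in hs0; lia. }
  exists p. split; [unfold p; lia|]. split; [unfold p; lia|]. split.
  - rewrite <- it_add, Nat.add_comm, it_add, hxp. reflexivity.
  - intros t ht. rewrite <- it_add. rewrite (it_mod x p) by (auto; unfold p; lia).
    assert (hr := nat_mod_lt (s0 + t) p ltac:(unfold p; lia)). split.
    + unfold x; rewrite <- it_add; apply hg'; unfold p in *; lia.
    + apply hm; auto.
Qed.

Lemma cyc_gt v : (v < N)%nat -> cyc v -> forall p, (1 <= p)%nat -> itv v p = v -> (L < p)%nat.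
Proof.
  intros hv [hg _] p h1 hp. destruct (le_lt_dec p L) as [h|h]; auto. exfalso; apply (Hret v hv hg p h1 h hp).
Qed.

Lemma cyc_le v w t t' : (v < N)%nat -> (w < N)%nat -> cyc v -> cyc w -> itv v t = itv w t' -> (v <= w)%nat.
Proof.
  intros hv hw cv [_ [pw [hpw1 [_ [hpw _]]]]] e.
  assert (ew : w = itv v (t + (pw * t' - t'))).
  { rewrite it_add, e, <- it_add. replace (t' + (pw * t' - t'))%nat with (t' * pw)%nat by nia.
    rewrite it_period; auto. }
  destruct cv as [_ [pv [hpv1 [_ [hpv hall]]]]].
  rewrite ew, (it_mod v pv) by auto. apply hall, nat_mod_lt; auto.
Qed.

Lemma cyc_inj v w t t' : (v < N)%nat -> (w < N)%nat -> cyc v -> cyc w -> (t <= L)%nat -> (t' <= L)%nat ->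
  itv v t = itv w t' -> v = w /\ t = t'.
Proof.
  intros hv hw cv cw ht ht' e.
  assert (vw : v = w).
  { assert (h1 := cyc_le v w t t' hv hw cv cw e).
    assert (h2 := cyc_le w v t' t hw hv cw cv (eq_sym e)). lia. }
  subst w. split; auto.
  assert (gen : forall a b, (a < b)%nat -> (b <= L)%nat -> itv v a = itv v b -> False).
  { intros a b hab hb eab. destruct cv as [hg [p [hp1 [hpN [hp hall]]]]].
    assert (hLp : (L < p)%nat).
    { apply (cyc_gt v hv); auto; split; auto; exists p; auto. }
    set (x := itv v a).
    assert (hx : itv x (b - a) = x).
    { unfold x; rewrite <- it_add. replace (a + (b - a))%nat with b by lia. auto. }
    refine (Hret x _ _ (b - a) _ _ hx).
    - apply it_lt; auto.
    - apply (hall a); lia.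
    - lia.
    - lia. }
  destruct (Nat.lt_total t t') as [h|[h|h]]; auto; exfalso.
  - apply (gen t t'); auto.
  - apply (gen t' t); auto.
Qed.

Definition cl := filter (bP cyc) (seq 0 N).

Lemma cyc_count : ((S L) * length cl <= N)%nat.
Proof.
  set (P := flat_map (fun v => map (fun t => itv v t) (seq 0 (S L))) cl).
  assert (hlen : length P = (length cl * S L)%nat).
  { unfold P. generalize cl as l. intros l. induction l as [|a l IH]; [reflexivity|].
    match goal with |- length (flat_map ?F _) = _ =>
      replace (flat_map F (a :: l)) with (F a ++ flat_map F l) by reflexivity end.
    rewrite length_app, length_map, length_seq, IH. simpl. lia. }
  assert (hcl : forall v, In v cl -> (v < N)%nat /\ cyc v).
  { intros v hv. unfold cl in hv. apply filter_In in hv. destruct hv as [h1 h2].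
    apply in_seq in h1. apply (proj1 (bP_true cyc v)) in h2. split; [lia|exact h2]. }
  assert (hnd : NoDup P).
  { apply NoDup_flat_map'.
    - apply NoDup_filter, seq_NoDup.
    - intros v hv. destruct (hcl v hv) as [hvN cv].
      apply NoDup_nth with (d := 0%nat). rewrite length_map, length_seq.
      intros t t' ht ht'. rewrite !(nth_indep _ 0%nat (itv v 0)) by (rewrite length_map, length_seq; lia).
      rewrite !map_nth, !seq_nth by lia. simpl. intros e.
      apply (cyc_inj v v t t'); auto; lia.
    - intros v w z hv hw hne hz hz'.
      apply in_map_iff in hz, hz'. destruct hz as [t [e1 ht]]. destruct hz' as [t' [e2 ht']].
      apply in_seq in ht, ht'. destruct (hcl v hv), (hcl w hw).
      apply hne. apply (cyc_inj v w t t'); auto; try lia; congruence. }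
  assert (hinc : incl P (seq 0 N)).
  { intros z hz. unfold P in hz. apply in_flat_map in hz. destruct hz as [v [hv hz]].
    apply in_map_iff in hz. destruct hz as [t [<- _]]. apply in_seq. destruct (hcl v hv).
    assert (h := it_lt sg v t Hsg ltac:(auto)). lia. }
  assert (h := NoDup_incl_length hnd hinc). rewrite length_seq in h. lia.
Qed.


Hypothesis HN : (0 < N)%nat.

Definition leastroot v t := isroot (itv v t) /\ forall t', (t' < t)%nat -> ~ isroot (itv v t').
Definition dep v : nat := epsilon (inhabits 0%nat) (leastroot v).

Lemma dep_spec v : (v < N)%nat -> leastroot v (dep v).
Proof. intros hv. unfold dep. apply epsilon_spec. apply least, reach, hv. Qed.

Lemma leastroot_uniq v t1 t2 : leastroot v t1 -> leastroot v t2 -> t1 = t2.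
Proof.
  intros [a1 b1] [a2 b2]. destruct (Nat.lt_total t1 t2) as [h|[h|h]]; auto; exfalso.
  - apply (b2 t1 h a1). - apply (b1 t2 h a2).
Qed.

Lemma nxt_lt v : (v < N)%nat -> (nxt sg v < N)%nat.
Proof. intros hv. unfold nxt. apply Htgt, Hsg, hv. Qed.

Lemma dep_root v : (v < N)%nat -> isroot v -> dep v = 0%nat.
Proof.
  intros hv hr. apply (leastroot_uniq v); [apply dep_spec; auto|]. split; [exact hr|intros; lia].
Qed.

Lemma dep_step v : (v < N)%nat -> ~ isroot v -> dep v = S (dep (nxt sg v)).
Proof.
  intros hv hr. apply (leastroot_uniq v); [apply dep_spec; auto|].
  destruct (dep_spec (nxt sg v) (nxt_lt v hv)) as [a b]. split.
  - rewrite it_S'. exact a.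
  - intros t' ht'. destruct t' as [|t']; [exact hr|]. rewrite it_S'. apply b; lia.
Qed.

Definition rt0 v := itv v (dep v).
Lemma rt0_root v : (v < N)%nat -> isroot v -> rt0 v = v.
Proof. intros hv hr. unfold rt0. rewrite dep_root; auto. Qed.
Lemma rt0_step v : (v < N)%nat -> ~ isroot v -> rt0 v = rt0 (nxt sg v).
Proof. intros hv hr. unfold rt0. rewrite dep_step, it_S'; auto. Qed.
Lemma rt0_is v : (v < N)%nat -> isroot (rt0 v) /\ (rt0 v < N)%nat.
Proof. intros hv. split; [apply dep_spec; auto|apply it_lt; auto]. Qed.

Definition E0 := flat_map (fun v => if bP isroot v then [] else [sg v; prt (sg v)]) (seq 0 N).
Definition R0 := filter (bP isroot) (seq 0 N).

Lemma memE0 h : In h E0 <-> exists v, (v < N)%nat /\ ~ isroot v /\ (h = sg v \/ h = prt (sg v)).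
Proof.
  unfold E0. rewrite in_flat_map. split.
  - intros [v [hv hh]]. apply in_seq in hv. exists v. split; [lia|].
    destruct (bP isroot v) eqn:e; [contradiction|].
    split. { intro hr. apply (proj2 (bP_true isroot v)) in hr. congruence. }
    simpl in hh. destruct hh as [e'|[e'|[]]]; auto.
  - intros [v [hv [hr hh]]]. exists v. split; [apply in_seq; lia|].
    destruct (bP isroot v) eqn:e. { apply (proj1 (bP_true isroot v)) in e. contradiction. }
    simpl. destruct hh; auto.
Qed.

Lemma memR0 r : In r R0 <-> (r < N)%nat /\ isroot r.
Proof.
  unfold R0. rewrite filter_In, in_seq, bP_true. split; intros [h1 h2]; split; auto; lia.
Qed.

Lemma nonroot_good v : ~ isroot v -> good v.
Proof. intros h. apply NNPP; intro hg; apply h; left; auto. Qed.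

Lemma noback v w : (v < N)%nat -> (w < N)%nat -> ~ isroot v -> ~ isroot w -> sg w <> prt (sg v).
Proof.
  intros hv hw hrv hrw e. destruct (Hsg v hv) as [hinv hsv]. destruct (Hsg w hw) as [hinw hsw].
  assert (ew : w = nxt sg v). { rewrite <- hsw, e. reflexivity. }
  assert (ev : nxt sg w = v). { unfold nxt. rewrite e, Hptgt; auto. }
  refine (Hret v hv (nonroot_good v hrv) 2 _ _ _); try lia.
  rewrite it_S, it_S, it_0, <- ew. exact ev.
Qed.

Lemma walk_rt0 d : forall v, (v < N)%nat -> dep v = d -> exists w, walk H E0 v w (rt0 v).
Proof.
  induction d as [|d IH]; intros v hv hd.
  - exists []. simpl. unfold rt0. rewrite hd. reflexivity.
  - assert (hr : ~ isroot v). { intro hr. rewrite dep_root in hd; auto. lia. }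
    rewrite dep_step in hd; auto. injection hd as hd.
    destruct (IH (nxt sg v) (nxt_lt v hv) hd) as [w hw].
    exists (sg v :: w). simpl. destruct (Hsg v hv) as [_ hs1]. split; [|split; auto].
    + apply memE0. exists v; auto.
    + rewrite rt0_step; auto.
Qed.

Lemma walk_nth T a c b dd : walk H T a c b ->
  (c <> [] -> hsrc (nth 0 c dd) = a) /\
  (forall t, (S t < length c)%nat -> tgt (nth t c dd) = hsrc (nth (S t) c dd)) /\
  (c <> [] -> tgt (nth (length c - 1) c dd) = b).
Proof.
  revert a; induction c as [|x c IH]; intros a hw.
  - split; [|split]; intros; [congruence|simpl in *; lia|congruence].
  - destruct hw as [hx [hsx hw]]. destruct (IH _ hw) as [i1 [i2 i3]].
    split; [|split].
    + intros; simpl; auto.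
    + intros t ht. destruct t as [|t].
      * simpl. destruct c as [|y c]; [simpl in ht; lia|]. symmetry; apply i1; congruence.
      * simpl. apply i2. simpl in ht; lia.
    + intros _. destruct c as [|y c].
      * simpl. simpl in hw. auto.
      * replace (length (x :: y :: c) - 1)%nat with (S (length (y :: c) - 1))%nat by (simpl; lia).
        simpl nth at 1. apply i3. congruence.
Qed.

Lemma edge_dep h : In h E0 ->
  (dep (hsrc h) = S (dep (tgt h)) /\ exists u, (u < N)%nat /\ ~ isroot u /\ h = sg u) \/
  (dep (tgt h) = S (dep (hsrc h)) /\ exists u, (u < N)%nat /\ ~ isroot u /\ h = prt (sg u)).
Proof.
  intros hh. apply memE0 in hh. destruct hh as [u [hu [hr [e|e]]]]; subst h;
  destruct (Hsg u hu) as [hin hsu].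
  - left. split; [|exists u; auto]. rewrite hsu. apply dep_step; auto.
  - right. split; [|exists u; auto]. rewrite psrc, Hptgt, hsu; auto. apply dep_step; auto.
Qed.

Lemma acyc0 : acyclic_sel H E0.
Proof.
  intros [v0 [c [hc [hw hd]]]].
  set (dd := sg 0). set (len := length c).
  assert (hlen : (0 < len)%nat) by (unfold len; destruct c; simpl; [congruence|lia]).
  destruct (argmax (fun u => dep (hsrc (nth u c dd))) len hlen) as [t [ht hmax]]. simpl in hmax.
  destruct (walk_nth _ _ _ _ dd hw) as [w1 [w2 w3]].
  set (e := nth t c dd).
  assert (he : In e E0) by (apply (walk_in _ _ _ _ _ hw), nth_In; auto).
  assert (htle : (dep (tgt e) <= dep (hsrc e))%nat).
  { destruct (Nat.eq_dec (S t) len) as [h|h].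
    - unfold e. assert (et : t = (length c - 1)%nat) by (unfold len in h; lia).
      rewrite et at 1. rewrite w3 by auto.
      rewrite <- (w1 hc). apply (hmax 0%nat); lia.
    - unfold e. rewrite w2 by (unfold len in *; lia). apply hmax; lia. }
  destruct (edge_dep e he) as [[hd1 [m [hm [hrm em]]]]|[hd1 _]]; [|lia].
  destruct (Hsg m hm) as [hinm hsm].
  set (q := if Nat.eq_dec t 0 then (len - 1)%nat else (t - 1)%nat).
  assert (hq : (q < len)%nat) by (unfold q; destruct (Nat.eq_dec t 0); lia).
  set (p := nth q c dd).
  assert (hp : In p E0) by (apply (walk_in _ _ _ _ _ hw), nth_In; auto).
  assert (htp : tgt p = m).
  { unfold p, q. rewrite <- hsm, <- em. unfold e. destruct (Nat.eq_dec t 0) as [h|h].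
    - subst t. unfold len. rewrite w3, w1; auto.
    - replace t with (S (t - 1)) at 2 by lia. apply w2. unfold len in ht; lia. }
  assert (hsp : (dep (hsrc p) <= dep m)%nat).
  { rewrite <- hsm, <- em. apply hmax; auto. }
  destruct (edge_dep p hp) as [[hd2 _]|[hd2 [u1 [hu1 [hru1 ep]]]]]; [rewrite htp in hd2; lia|].
  destruct (Hsg u1 hu1) as [hin1 hs1].
  assert (u1m : u1 = m). { rewrite <- htp, ep, Hptgt; auto. }
  subst u1. rewrite <- em in ep.
  destruct (Nat.eq_dec q t) as [hqt|hqt].
  - apply (noback m m hm hm hrm hrm). rewrite <- em. fold p in ep. rewrite <- ep, em.
    unfold p. rewrite hqt. fold e. rewrite em. reflexivity.
  - destruct (hd dd t q ht hq ltac:(auto)) as [_ hne]. apply hne. fold e p. rewrite ep, Hpp; auto.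
    rewrite em; auto.
Qed.

Lemma Inv0 : Inv E0 R0 rt0.
Proof.
  split; [|split; [|split; [|split; [|split; [|split; [|split]]]]]].
  - intros h hh. apply memE0 in hh. destruct hh as [v [hv [_ [e|e]]]]; subst h;
    destruct (Hsg v hv); auto.
  - intros h hh. apply memE0 in hh. destruct hh as [v [hv [hr [e|e]]]]; subst h; apply memE0;
    exists v; (split; [auto|split; [auto|]]); [right; auto | left; destruct (Hsg v hv); rewrite Hpp; auto].
  - intros v hv. apply memR0. destruct (rt0_is v hv); auto.
  - intros v hv. apply (walk_rt0 (dep v)); auto.
  - intros h hh. apply memE0 in hh. destruct hh as [v [hv [hr [e|e]]]]; subst h;
    destruct (Hsg v hv) as [hin hsv].
    + rewrite hsv. apply rt0_step; auto.
    + rewrite psrc, Hptgt, hsv; auto. symmetry; apply rt0_step; auto.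
  - intros r hr. apply memR0 in hr. destruct hr. split; auto. apply rt0_root; auto.
  - apply acyc0.
  - apply NoDup_filter, seq_NoDup.
Qed.

Definition nbad := length (filter (bP (fun v => ~ good v)) (seq 0 N)).

Theorem core : exists T A Sr c, In T (sublists hs) /\ spanning_tree H T /\
  In A (sublists hs) /\ In Sr (sublists hs) /\ (S L * c <= N)%nat /\
  (length A <= nbad + c)%nat /\ (length Sr <= nbad + c)%nat /\ Rel sg T A Sr.
Proof.
  assert (hR0 : (length R0 <= nbad + length cl)%nat).
  { exact (count_or (fun v => ~ good v) cyc (seq 0 N)). }
  assert (hR0pos : (0 < length R0)%nat).
  { destruct (rt0_is 0 HN) as [h1 h2]. assert (In (rt0 0) R0) by (apply memR0; auto).
    destruct R0; simpl in *; [contradiction|lia]. }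
  destruct (extend (length R0 - 1) E0 R0 rt0 ltac:(lia) Inv0) as [Ef [Aadd [hsp [hmem [hdisj [hA hlA]]]]]].
  assert (hEfhs : forall x, In x Ef -> In x hs).
  { intros x hx. apply hmem in hx. destruct hx as [hx|[y [hy [e|e]]]]; subst; auto.
    destruct Inv0 as [i1 _]; auto. }
  exists (filter (bP (fun h => In h Ef)) hs), (filter (bP (fun h => In h Aadd)) hs),
         (filter (bP (fun h => isroot (hsrc h) /\ h = sg (hsrc h))) hs), (length cl).
  split; [apply filter_sublists|]. split.
  { eapply spanning_ext; [|exact hsp]. intros h. rewrite filter_In, bP_true. split; auto. tauto. }
  split; [apply filter_sublists|]. split; [apply filter_sublists|]. split; [apply cyc_count|].
  split; [|split].
  - eapply Nat.le_trans; [|exact hR0].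
    assert (h := NoDup_incl_length (NoDup_filter (bP (fun h => In h Aadd)) Hnd) (l' := Aadd)
      ltac:(intros x hx; apply filter_In in hx; destruct hx as [_ hx]; exact (proj1 (bP_true (fun h => In h Aadd) x) hx))).
    lia.
  - eapply Nat.le_trans; [|exact hR0].
    assert (h := NoDup_incl_length (NoDup_filter (bP (fun h => isroot (hsrc h) /\ h = sg (hsrc h))) Hnd) (l' := map sg R0)).
    rewrite length_map in h. apply h.
    intros x hx. apply filter_In in hx. destruct hx as [hx1 hx2].
    apply (proj1 (bP_true (fun h => isroot (hsrc h) /\ h = sg (hsrc h)) x)) in hx2.
    destruct hx2 as [hr e]. rewrite e. apply in_map, memR0. split; auto.
  - exists isroot. split; [|split; [|split]].
    + intros h. rewrite filter_In, bP_true. tauto.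
    + intros h. rewrite !filter_In, !bP_true. rewrite <- memE0. split.
      * intros [[hh hin] [hn1 hn2]]. apply hmem in hin. destruct hin as [hin|[y [hy [e|e]]]]; auto.
        -- subst; exfalso; auto.
        -- exfalso. apply hn2. split; [apply Hpin; auto|]. subst h. rewrite Hpp; auto.
      * intros hh. assert (hhs : In h hs) by (destruct Inv0 as [i1 _]; auto).
        destruct (hdisj h hh) as [d1 d2]. split; [split; auto; apply hmem; auto|].
        split; intros [_ hc]; auto.
    + intros v hv. apply reach, hv.
    + intros v w hv hw hrv hrw. apply noback; auto.
Qed.
End Fixed.
End Core.


Section Inst.
Variable G : group.
Variable H : G -> Prop.
Variable f : G -> Z.
Hypothesis hn : normal_subgroup H.
Hypothesis hfin : finite_index H.
Hypothesis hwb : well_balanced f.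
Notation N := (index H).
Notation hs := (halfedges H f).

Lemma suppL_spec : NoDup (suppL f) /\ forall s, In s (suppL f) <-> (s <> gone /\ f s <> 0%Z).
Proof.
  unfold suppL. apply epsilon_spec.
  destruct hwb as [[L0 [hnd [hin _]]] _].
  exists (filter (bP (fun s => s <> gone /\ f s <> 0%Z)) L0). split.
  - apply NoDup_filter; auto.
  - intros s. rewrite filter_In, bP_true. split; [tauto|]. intros h; split; auto. apply hin; tauto.
Qed.

Lemma in_suppL s : In s (suppL f) <-> (s <> gone /\ f s <> 0%Z).
Proof. apply suppL_spec. Qed.

Lemma mem_hs (h : halfedge G) : In h hs <->
  (hsrc h < N)%nat /\ In (fst (snd h)) (suppL f) /\ (snd (snd h) < Z.abs_nat (f (fst (snd h))))%nat.
Proof.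
  destruct h as [i [s k]]. unfold halfedges, hsrc. simpl. rewrite in_flat_map. split.
  - intros [i' [hi' hh]]. apply in_flat_map in hh. destruct hh as [s' [hs' hh]].
    apply in_map_iff in hh. destruct hh as [k' [e hk']]. injection e as e1 e2 e3. subst.
    apply in_seq in hi', hk'. repeat split; auto; lia.
  - intros [hi [hs' hk]]. exists i. split; [apply in_seq; lia|].
    apply in_flat_map. exists s. split; auto. apply in_map_iff. exists k. split; auto. apply in_seq; lia.
Qed.

Lemma hs_nodup : NoDup hs.
Proof.
  unfold halfedges. apply NoDup_flat_map'.
  - apply seq_NoDup.
  - intros i _. apply NoDup_flat_map'.
    + apply suppL_spec.
    + intros s _. apply NoDup_map_NoDup_ForallPairs; [|apply seq_NoDup].
      intros a b _ _ e. injection e; auto.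
    + intros s s' z _ _ hne hz hz'. apply in_map_iff in hz, hz'.
      destruct hz as [k [<- _]]. destruct hz' as [k' [e _]]. injection e; intros; congruence.
  - intros i j z _ _ hne hz hz'. apply in_flat_map in hz, hz'.
    destruct hz as [s [_ hz]]. destruct hz' as [s' [_ hz']].
    apply in_map_iff in hz, hz'. destruct hz as [k [<- _]]. destruct hz' as [k' [e _]].
    injection e; intros; congruence.
Qed.

Lemma hs_src h : In h hs -> (hsrc h < N)%nat.
Proof. intros hh. apply mem_hs in hh. tauto. Qed.
Lemma hs_tgt h : In h hs -> (htgt H h < N)%nat.
Proof. intros _. apply cidx_lt; auto. Qed.

Lemma hs_ptgt h : In h hs -> htgt H (partner H h) = hsrc h.
Proof.
  intros hh. apply mem_hs in hh. destruct hh as [hi _].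
  destruct h as [i [s k]]. unfold htgt, partner, hsrc in *. simpl in *.
  unfold htgt; simpl. rewrite cidx_mulr; auto. rewrite <- gmulA, gmulVr, gmul1r. apply cidx_rep; auto.
Qed.

Lemma hs_pp h : In h hs -> partner H (partner H h) = h.
Proof.
  intros hh. assert (e := hs_ptgt h hh). destruct h as [i [s k]].
  unfold partner at 1. rewrite e. simpl. rewrite ginv_ginv. reflexivity.
Qed.

Lemma hs_pin h : In h hs -> In (partner H h) hs.
Proof.
  intros hh. apply mem_hs in hh. destruct hh as [hi [hs' hk]].
  destruct h as [i [s k]]. simpl in *. apply mem_hs. simpl. split; [apply cidx_lt; auto|].
  apply in_suppL in hs'. destruct hs' as [hs1 hs2].
  destruct hwb as [_ [_ [hsym _]]].
  split.
  - apply in_suppL. split.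
    + intro e. apply hs1. apply (ginv_inj G). rewrite e, ginv_one. reflexivity.
    + rewrite <- hsym. auto.
  - rewrite <- hsym. auto.
Qed.

Lemma step_edge g s : In s (suppL f) ->
  exists h, In h hs /\ hsrc h = cidx H g /\ htgt H h = cidx H (gmul g s).
Proof.
  intros hs'. exists (cidx H g, (s, 0%nat)). split; [|split; auto].
  - apply mem_hs. simpl. split; [apply cidx_lt; auto|]. split; auto.
    apply in_suppL in hs'. lia.
  - unfold htgt. simpl. apply cidx_mulr; auto.
Qed.

Lemma reach_all g : exists w, walk H hs (cidx H gone) w (cidx H g).
Proof.
  destruct hwb as [_ [_ [hsym hgen]]].
  induction (hgen g) as [|g s hg [w hw] hs'|g s hg [w hw] hs'].
  - exists []. simpl; auto.
  - destruct (classic (s = gone)) as [e|e].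
    + subst. rewrite gmul1r. eauto.
    + destruct (step_edge g s ltac:(apply in_suppL; auto)) as [h [hh [e1 e2]]].
      exists (w ++ [h]). eapply walk_app; [exact hw|]. simpl. auto.
  - destruct (classic (s = gone)) as [e|e].
    + subst. rewrite ginv_one, gmul1r. eauto.
    + assert (hi : In (ginv s) (suppL f)).
      { apply in_suppL. split.
        - intro e'. apply e. apply (ginv_inj G). rewrite e', ginv_one. reflexivity.
        - rewrite <- hsym. auto. }
      destruct (step_edge g (ginv s) hi) as [h [hh [e1 e2]]].
      exists (w ++ [h]). eapply walk_app; [exact hw|]. simpl. auto.
Qed.

Lemma hs_conn i j : (i < N)%nat -> (j < N)%nat -> exists w, walk H hs i w j.
Proof.
  intros hi hj.
  destruct (reach_all (rep H i)) as [w1 hw1]. destruct (reach_all (rep H j)) as [w2 hw2].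
  rewrite cidx_rep in hw1, hw2 by auto.
  destruct (walk_rev G H f hs_ptgt hs _ _ _ (fun h x => x) hs_pin hw1) as [w3 hw3].
  exists (w3 ++ w2). eapply walk_app; eauto.
Qed.

End Inst.


Section Sof.
Variable G : group.
Variable f : G -> Z.
Hypothesis hwb : well_balanced f.

Fixpoint ball (n : nat) : list G :=
  match n with
  | O => [gone]
  | S n => ball n ++ flat_map (fun b => map (gmul b) (suppL f)) (ball n)
  end.

Lemma ball_mono n k : incl (ball n) (ball (n + k)).
Proof.
  induction k as [|k IH]. - rewrite Nat.add_0_r. apply incl_refl.
  - rewrite Nat.add_succ_r. simpl. intros x hx. apply in_or_app. left. apply IH, hx.
Qed.

Lemma ball_step n b s : In b (ball n) -> In s (suppL f) -> In (gmul b s) (ball (S n)).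
Proof.
  intros hb hs. simpl. apply in_or_app. right. apply in_flat_map. exists b. split; auto.
  apply in_map; auto.
Qed.

Fixpoint gpath (y : G -> G * nat) (t : nat) : G :=
  match t with O => gone | S t => gmul (gpath y t) (fst (y (gpath y t))) end.

Lemma gpath_ball y t : (forall g, in_Sstar f (y g)) -> In (gpath y t) (ball t).
Proof.
  intros hy. induction t as [|t IH]; simpl; auto.
  apply ball_step; auto. apply in_suppL; auto. destruct (hy (gpath y t)) as [h1 [h2 _]]; auto.
Qed.

Lemma gpath_nonret y p : Ff f y -> (1 <= p)%nat -> gpath y p <> gone.
Proof.
  intros [_ [_ h3]] hp e. apply h3. exists (gpath y), p. split; auto.
Qed.

Variable H : G -> Prop.
Hypothesis hn : normal_subgroup H.
Hypothesis hfin : finite_index H.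
Notation N := (index H).
Notation hs := (halfedges H f).
Notation A := (G * nat)%type.

Variable L : nat.
Hypothesis HL : (2 <= L)%nat.
Hypothesis Havoid : forall g, In g (ball L) -> H g -> g = gone.
Definition W := map ginv (ball L).

Section Phi.
Variable phi : nat -> G -> A.
Hypothesis hphiF : forall i, (i < N)%nat -> Ff f (phi i).

Definition goodi (i : nat) : Prop :=
  forall s, In s W -> rho (phi (cidx H (gmul s (rep H i)))) (Pilot.Defs.shift s (phi i)) = 0%R.
Definition sgp (v : nat) : halfedge G := (v, phi (iota G H v) gone).
Definition goodv (v : nat) : Prop := goodi (iota G H v).

Lemma sgp_ok : sgok G H f sgp.
Proof.
  intros v hv. split; [|reflexivity]. apply mem_hs; auto. simpl. split; auto.
  assert (hi := iota_lt G H hfin v).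
  destruct (hphiF _ hi) as [h1 _]. destruct (h1 gone) as [a [b c]]. split; auto.
  apply in_suppL; auto.
Qed.

Lemma rho0 (x y : G -> A) : rho x y = 0%R -> x gone = y gone.
Proof. unfold rho. destruct (excluded_middle_informative (x gone = y gone)); auto. intros; lra. Qed.

Lemma track v : (v < N)%nat -> goodv v -> forall t, (t <= L)%nat ->
  iota G H (it G H sgp v t) = cidx H (gmul (ginv (gpath (phi (iota G H v)) t)) (rep H (iota G H v))).
Proof.
  intros hv hg. set (i := iota G H v). set (y := phi i).
  assert (hi : (i < N)%nat) by apply iota_lt, hfin.
  assert (hy : Ff f y) by (apply hphiF, hi).
  induction t as [|t IH]; intros ht.
  - simpl. rewrite ginv_one, gmul1l, cidx_rep; auto.
  - rewrite it_S. unfold nxt, sgp at 1, htgt. simpl fst.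
    rewrite iota_step; auto.
    rewrite IH by lia.
    assert (hgw : In (ginv (gpath y t)) W).
    { apply in_map. assert (hb := ball_mono t (L - t)). replace (t + (L - t))%nat with L in hb by lia.
      apply hb, gpath_ball, hy. }
    specialize (hg _ hgw). fold i in hg. apply rho0 in hg. unfold Pilot.Defs.shift in hg.
    rewrite ginv_ginv, gmul1r in hg. fold y in hg. rewrite hg.
    rewrite cidx_mull; auto. simpl gpath. rewrite ginv_mul, <- gmulA. reflexivity.
Qed.

Lemma sgp_ret v : (v < N)%nat -> goodv v -> forall p, (1 <= p)%nat -> (p <= L)%nat -> it G H sgp v p <> v.
Proof.
  intros hv hg p hp1 hpL e.
  set (i := iota G H v). set (y := phi i).
  assert (hi : (i < N)%nat) by apply iota_lt, hfin.
  assert (hy : Ff f y) by (apply hphiF, hi).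
  assert (ht := track v hv hg p hpL). rewrite e in ht. fold i y in ht.
  rewrite <- (cidx_rep G H hfin i hi) in ht at 1.
  apply (cidx_eq_inv G H hn hfin) in ht. unfold ceq in ht.
  apply (Hconj G H hn (rep H i)) in ht.
  rewrite mulVK, <- gmulA, gmulVr, gmul1r in ht. apply (Hinv G H hn) in ht. rewrite ginv_ginv in ht.
  apply (gpath_nonret y p hy hp1). apply Havoid; auto.
  assert (hb := ball_mono p (L - p)). replace (p + (L - p))%nat with L in hb by lia.
  apply hb, gpath_ball, hy.
Qed.


Definition rsum {X : Type} (F : X -> R) (l : list X) : R := fold_right Rplus 0%R (map F l).

Lemma rsum_nonneg {X : Type} (F : X -> R) l : (forall x, (0 <= F x)%R) -> (0 <= rsum F l)%R.
Proof. intros h. unfold rsum. induction l as [|x l IH]; simpl; [lra|]. specialize (h x). lra. Qed.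
Lemma rsum_le {X : Type} (F F' : X -> R) l : (forall x, In x l -> (F x <= F' x)%R) -> (rsum F l <= rsum F' l)%R.
Proof.
  induction l as [|x l IH]; intros h; unfold rsum; simpl; [lra|].
  assert (h1 := h x (or_introl eq_refl)). assert (h2 : (rsum F l <= rsum F' l)%R) by (apply IH; intros; apply h; simpl; auto).
  unfold rsum in h2; lra.
Qed.
Lemma rsum_elem {X : Type} (F : X -> R) l x : In x l -> (forall y, (0 <= F y)%R) -> (F x <= rsum F l)%R.
Proof.
  induction l as [|y l IH]; intros hx h; [contradiction|]. unfold rsum; simpl.
  destruct hx as [e|hx].
  - subst. assert (0 <= rsum F l)%R by (apply rsum_nonneg; auto). unfold rsum in *; lra.
  - specialize (IH hx h). specialize (h y). unfold rsum in *; lra.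
Qed.
Lemma rsum_swap {X Y : Type} (F : X -> Y -> R) (l : list X) (m : list Y) :
  rsum (fun x => rsum (F x) m) l = rsum (fun y => rsum (fun x => F x y) l) m.
Proof.
  induction l as [|x l IH]; unfold rsum in *; simpl.
  - induction m as [|y m IHm]; simpl; auto; lra.
  - rewrite IH. clear IH. induction m as [|y m IHm]; simpl; [lra|]. rewrite <- IHm. lra.
Qed.
Lemma rsum_const {X : Type} (c : R) (l : list X) : rsum (fun _ => c) l = (INR (length l) * c)%R.
Proof.
  induction l as [|x l IH]; unfold rsum in *; simpl; [lra|]. rewrite IH. destruct (length l); simpl; lra.
Qed.
Lemma count_rsum {X : Type} (P : X -> Prop) (l : list X) :
  INR (length (filter (bP P) l)) = rsum (fun x => if bP P x then 1%R else 0%R) l.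
Proof.
  induction l as [|x l IH]; unfold rsum in *; simpl; auto.
  destruct (bP P x); simpl; rewrite <- IH; auto. destruct (length (filter (bP P) l)); simpl; lra.
  lra.
Qed.

Lemma rho01 (x y : G -> A) : rho x y = 0%R \/ rho x y = 1%R.
Proof. unfold rho. destruct (excluded_middle_informative (x gone = y gone)); auto. Qed.

Lemma nbad_bound (delta : R) : in_Map (Ff f) H W delta phi ->
  (INR (nbad G H goodv) <= INR (length W) * delta ^ 2 * INR N)%R.
Proof.
  intros [_ hM].
  set (F := fun s i => (rho (phi (cidx H (gmul s (rep H i)))) (Pilot.Defs.shift s (phi i)) ^ 2)%R).
  assert (hF0 : forall s i, (0 <= F s i)%R) by (intros; unfold F; apply pow2_ge_0).
  assert (step1 : (nbad G H goodv <= length (filter (bP (fun i => ~ goodi i)) (seq 0 N)))%nat).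
  { unfold nbad. set (l1 := filter _ (seq 0 N)).
    assert (h : length l1 = length (map (iota G H) l1)) by (rewrite length_map; auto).
    rewrite h. apply NoDup_incl_length.
    - apply NoDup_map_NoDup_ForallPairs.
      + intros a b ha hb e. unfold l1 in ha, hb. apply filter_In in ha, hb.
        destruct ha as [ha _]. destruct hb as [hb _]. apply in_seq in ha, hb.
        rewrite <- (iota_iota G H hn hfin a), <- (iota_iota G H hn hfin b), e; auto; lia.
      + apply NoDup_filter, seq_NoDup.
    - intros x hx. apply in_map_iff in hx. destruct hx as [v [<- hv]]. unfold l1 in hv.
      apply filter_In in hv. destruct hv as [hv1 hv2].
      apply filter_In. split; [apply in_seq; split; [lia|]; simpl; apply iota_lt, hfin|].
      apply bP_true. apply (proj1 (bP_true (fun v => ~ goodv v) v)) in hv2. exact hv2. }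
  assert (step2 : (INR (length (filter (bP (fun i => ~ goodi i)) (seq 0 N))) <=
                   rsum (fun i => rsum (fun s => F s i) W) (seq 0 N))%R).
  { rewrite count_rsum. apply rsum_le. intros i _.
    destruct (bP (fun i => ~ goodi i) i) eqn:e.
    - apply (proj1 (bP_true (fun i => ~ goodi i) i)) in e. unfold goodi in e.
      apply not_all_ex_not in e. destruct e as [s e]. apply imply_to_and in e. destruct e as [hs e].
      eapply Rle_trans; [|apply (rsum_elem (fun s => F s i) W s hs); intros; apply hF0].
      unfold F. destruct (rho01 (phi (cidx H (gmul s (rep H i)))) (Pilot.Defs.shift s (phi i))) as [r|r];
      rewrite r in *; [contradiction|]. lra.
    - apply rsum_nonneg. intros; apply hF0. }
  rewrite rsum_swap in step2.
  assert (step3 : forall s, In s W -> (rsum (fun i => F s i) (seq 0 N) <= delta ^ 2 * INR N)%R).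
  { intros s hs. specialize (hM s hs). fold (rsum (fun i => F s i) (seq 0 N)) in hM.
    set (S0 := rsum (fun i => F s i) (seq 0 N)) in *.
    assert (hS0 : (0 <= S0)%R) by (apply rsum_nonneg; auto).
    assert (hNp : (0 < INR N)%R) by (apply lt_0_INR, index_pos, hfin).
    set (x := (/ INR N * S0)%R) in *.
    assert (hx : (0 <= x)%R) by (unfold x; apply Rmult_le_pos; [left; apply Rinv_0_lt_compat|]; auto).
    assert (hxd : (x <= delta ^ 2)%R).
    { rewrite <- (sqrt_sqrt x hx). simpl. rewrite Rmult_1_r.
      assert (0 <= sqrt x)%R by apply sqrt_pos. apply Rmult_le_compat; auto. }
    assert (S0 = INR N * x)%R by (unfold x; field; lra). nra. }
  assert (step4 : (rsum (fun s => rsum (fun i => F s i) (seq 0 N)) W <= rsum (fun _ => delta ^ 2 * INR N) W)%R).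
  { apply rsum_le. auto. }
  rewrite rsum_const in step4. apply le_INR in step1. lra.
Qed.
End Phi.

Definition Kb (delta : R) : R := (INR (length W) * delta ^ 2 * INR N + INR N / INR (S L))%R.
Definition Sm (delta : R) := filter (bP (fun l : list (halfedge G) => (INR (length l) <= Kb delta)%R)) (sublists hs).
Definition Trees := filter (bP (spanning_tree H)) (sublists hs).

Lemma tau_Trees : tau H f = length Trees.
Proof. reflexivity. Qed.

Lemma fold_Rmax0 (l : list R) : (forall a, In a l -> a = 0%R) -> fold_right Rmax 0%R l = 0%R.
Proof.
  induction l as [|a l IH]; simpl; intros h; auto. rewrite IH by auto. rewrite (h a) by auto.
  unfold Rmax. destruct (Rle_dec 0 0); lra.
Qed.

Theorem countF (delta eps : R) (F : list (nat -> G -> A)) : (0 < eps)%R ->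
  (forall phi, In phi F -> in_Map (Ff f) H W delta phi) -> separated H eps F ->
  (length F <= length Trees * length (Sm delta) * length (Sm delta))%nat.
Proof.
  intros heps hM hsep.
  set (P := list_prod (list_prod Trees (Sm delta)) (Sm delta)).
  set (spec := fun (phi : nat -> G -> A) (c : list (halfedge G) * list (halfedge G) * list (halfedge G)) =>
         In c P /\ Rel G H f (sgp phi) (fst (fst c)) (snd (fst c)) (snd c)).
  set (cd := fun phi => epsilon (inhabits ([], [], [])) (spec phi)).
  assert (hHN : (0 < N)%nat) by apply index_pos, hfin.
  assert (hcd : forall phi, In phi F -> spec phi (cd phi)).
  { intros phi hphi. unfold cd. apply epsilon_spec.
    assert (hF : forall i, (i < N)%nat -> Ff f (phi i)) by (apply hM, hphi).
    destruct (core G H f (hs_nodup G H f hwb) (hs_src G H f) (hs_tgt G H f hfin)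
       (hs_pin G H f hfin hwb) (hs_ptgt G H f hn hfin) (hs_pp G H f hn hfin)
       (hs_conn G H f hn hfin hwb) (sgp phi) (sgp_ok phi hF) (goodv phi) L HL
       (sgp_ret phi hF) hHN) as [T [Aa [Sr [c [hT [hsp [hA [hS [hc [hlA [hlS hRel]]]]]]]]]]].
    exists (T, Aa, Sr). split; [|exact hRel].
    assert (hnb := nbad_bound phi delta (hM phi hphi)).
    assert (hcR : (INR c <= INR N / INR (S L))%R).
    { apply le_INR in hc. rewrite mult_INR in hc. assert (0 < INR (S L))%R by (apply lt_0_INR; lia).
      apply (Rmult_le_reg_l (INR (S L))); auto. unfold Rdiv. rewrite <- Rmult_assoc, (Rmult_comm _ (INR N)), Rmult_assoc, Rinv_r; lra. }
    assert (hK : forall l : list (halfedge G), (length l <= nbad G H (goodv phi) + c)%nat -> (INR (length l) <= Kb delta)%R).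
    { intros l hl. apply le_INR in hl. rewrite plus_INR in hl. unfold Kb. lra. }
    unfold P. apply in_prod; [apply in_prod|].
    - apply filter_In. split; auto. apply bP_true; auto.
    - apply filter_In. split; auto. apply (proj2 (bP_true (fun l : list (halfedge G) => (INR (length l) <= Kb delta)%R) Aa)). auto.
    - apply filter_In. split; auto. apply (proj2 (bP_true (fun l : list (halfedge G) => (INR (length l) <= Kb delta)%R) Sr)). auto. }
  set (d0 := fun (_ : nat) (_ : G) => (@gone G, 0%nat)).
  assert (hnd : NoDup (map cd F)).
  { apply (NoDup_nth (map cd F) (cd d0)). rewrite length_map. intros i j hi hj e.
    rewrite !map_nth in e. apply NNPP; intro hij.
    destruct (hcd _ (nth_In F d0 hi)) as [_ r1]. destruct (hcd _ (nth_In F d0 hj)) as [_ r2].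
    rewrite e in r1.
    assert (hF1 : forall k, (k < N)%nat -> Ff f (nth i F d0 k)) by (apply hM, nth_In, hi).
    assert (hF2 : forall k, (k < N)%nat -> Ff f (nth j F d0 k)) by (apply hM, nth_In, hj).
    assert (hdec := decode G H f (hs_ptgt G H f hn hfin) (hs_pp G H f hn hfin) _ _ _ _ _
                      (sgp_ok _ hF1) (sgp_ok _ hF2) r1 r2).
    specialize (hsep d0 i j hi hj hij).
    assert (h0 : rho_inf H (nth i F d0) (nth j F d0) = 0%R).
    { unfold rho_inf. apply fold_Rmax0. intros a ha. apply in_map_iff in ha.
      destruct ha as [k [<- hk]]. apply in_seq in hk.
      assert (hk' : (iota G H k < N)%nat) by apply iota_lt, hfin.
      specialize (hdec _ hk'). unfold sgp in hdec. injection hdec as hdec.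
      rewrite (iota_iota G H hn hfin k) in hdec by lia.
      unfold rho. destruct (excluded_middle_informative _); [reflexivity|contradiction]. }
    lra. }
  assert (hinc : incl (map cd F) P).
  { intros c hc. apply in_map_iff in hc. destruct hc as [phi [<- hphi]]. apply hcd, hphi. }
  assert (h := NoDup_incl_length hnd hinc). rewrite length_map in h. unfold P in h.
  rewrite !length_prod in h. exact h.
Qed.
End Sof.

Local Open Scope R_scope.

Lemma ln_le' x y : 0 < x -> x <= y -> ln x <= ln y.
Proof. intros hx hxy. destruct (Rle_lt_or_eq_dec _ _ hxy) as [h|h]; [left; apply ln_increasing; auto|subst; lra]. Qed.

Lemma exp_le' x y : x <= y -> exp x <= exp y.
Proof. intros h. destruct (Rle_lt_or_eq_dec _ _ h) as [h'|h']; [left; apply exp_increasing; auto|subst; lra]. Qed.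

Lemma rsum_app {X : Type} (F : X -> R) l m : rsum F (l ++ m) = rsum F l + rsum F m.
Proof. unfold rsum. rewrite map_app, fold_right_app. induction l; simpl; [ring|]. unfold rsum in *. rewrite IHl. ring. Qed.

Lemma rsum_scal {X : Type} (F : X -> R) k l : rsum (fun x => k * F x) l = k * rsum F l.
Proof. unfold rsum. induction l; simpl; [ring|]. rewrite IHl. ring. Qed.

Lemma gf {X : Type} (x : R) (l : list X) : rsum (fun m => x ^ length m) (sublists l) = (1 + x) ^ length l.
Proof.
  induction l as [|a l IH]; [unfold rsum; simpl; ring|].
  simpl sublists. rewrite rsum_app. unfold rsum at 1. rewrite map_map. simpl length.
  fold (rsum (fun y => x ^ S (length y)) (sublists l)).
  replace (rsum (fun y : list X => x ^ S (length y)) (sublists l)) with (x * rsum (fun m => x ^ length m) (sublists l)).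
  - rewrite IH. simpl. ring.
  - rewrite <- rsum_scal. reflexivity.
Qed.

Lemma sm_bound {X : Type} (l : list X) (K x : R) : 0 < x < 1 ->
  INR (length (filter (bP (fun m : list X => INR (length m) <= K)) (sublists l))) <=
  exp (K * - ln x) * (1 + x) ^ length l.
Proof.
  intros hx. rewrite count_rsum. rewrite <- gf, <- rsum_scal. apply rsum_le. intros m _.
  assert (hp : 0 < x ^ length m) by (apply pow_lt; lra).
  destruct (bP (fun m : list X => INR (length m) <= K) m) eqn:e.
  - apply (proj1 (bP_true (fun m : list X => INR (length m) <= K) m)) in e.
    rewrite <- (Rpower_pow (length m) x) by lra. unfold Rpower. rewrite <- exp_plus.
    rewrite <- exp_0. apply exp_le'.
    assert (ln x < 0) by (rewrite <- ln_1; apply ln_increasing; lra). nra.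
  - assert (0 < exp (K * - ln x)) by apply exp_pos. nra.
Qed.

Lemma length_flat_map' {X Y : Type} (F : X -> list Y) (l : list X) (D : nat) :
  (forall x, length (F x) = D) -> length (flat_map F l) = (length l * D)%nat.
Proof. intros h. induction l as [|a l IH]; simpl; auto. rewrite length_app, IH, h. lia. Qed.

Section Len.
Variable G : group.
Variable f : G -> Z.
Definition Dg : nat := length (flat_map (fun s => map (fun k => (s, k)) (seq 0 (Z.abs_nat (f s)))) (suppL f)).
Lemma length_hs (H : G -> Prop) : length (halfedges H f) = (index H * Dg)%nat.
Proof.
  unfold halfedges. rewrite (length_flat_map' _ _ Dg), length_seq; auto.
  intros i. unfold Dg. generalize (suppL f). intros l. induction l as [|s l IH]; [reflexivity|].
  cbn [flat_map]. rewrite !length_app, !length_map. f_equal. exact IH.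
Qed.
End Len.

Local Open Scope R_scope.

Lemma params (gam : R) (D : nat) : 0 < gam -> exists x L, 0 < x < 1 /\ (2 <= L)%nat /\
  forall wl : nat, exists delta, 0 < delta /\ forall Nn, 0 < Nn ->
    2 * ((INR wl * delta ^ 2 * Nn + Nn / INR (S L)) * (- ln x) + Nn * INR D * x) <= 3 / 4 * gam * Nn.
Proof.
  intros hg.
  assert (hD : 0 <= INR D) by apply pos_INR.
  set (x := Rmin (1/2) (gam / (8 * (INR D + 1)))).
  assert (hx0 : 0 < x). { unfold x. apply Rmin_pos; [lra|]. apply Rdiv_lt_0_compat; lra. }
  assert (hx1 : x <= 1/2) by apply Rmin_l.
  assert (hx2 : x <= gam / (8 * (INR D + 1))) by apply Rmin_r.
  assert (hDx : INR D * x <= gam / 8).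
  { apply Rmult_le_compat_l with (r := INR D + 1) in hx2; [|lra].
    replace ((INR D + 1) * (gam / (8 * (INR D + 1)))) with (gam / 8) in hx2 by (field; lra). nra. }
  set (a := - ln x).
  assert (ha : 0 < a). { unfold a. assert (ln x < 0) by (rewrite <- ln_1; apply ln_increasing; lra). lra. }
  destruct (INR_unbounded (8 * a / gam)) as [n hn].
  exists x, (n + 2)%nat. split; [lra|]. split; [lia|].
  assert (hSL : 8 * a / gam < INR (S (n + 2))).
  { eapply Rlt_le_trans; [apply hn|]. apply le_INR; lia. }
  assert (hSL0 : 0 < INR (S (n + 2))) by (apply lt_0_INR; lia).
  assert (haL : a / INR (S (n + 2)) <= gam / 8).
  { apply Rmult_lt_compat_r with (r := gam / 8) in hSL; [|lra].
    replace (8 * a / gam * (gam / 8)) with a in hSL by (field; lra).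
    unfold Rdiv. apply (Rmult_le_reg_r (INR (S (n + 2)))); auto.
    rewrite Rmult_assoc, Rinv_l by lra. lra. }
  intros wl. assert (hw : 0 <= INR wl) by apply pos_INR.
  set (q := gam / (8 * (a + 1) * (INR wl + 1))).
  assert (hq : 0 < q) by (unfold q; apply Rdiv_lt_0_compat; nra).
  exists (sqrt q). split; [apply sqrt_lt_R0; auto|].
  assert (hd2 : sqrt q ^ 2 = q) by (simpl; rewrite Rmult_1_r; apply sqrt_sqrt; lra).
  rewrite hd2.
  assert (hwq : INR wl * q * a <= gam / 8).
  { unfold q. replace (INR wl * (gam / (8 * (a + 1) * (INR wl + 1))) * a) with
      ((gam / 8) * ((INR wl / (INR wl + 1)) * (a / (a + 1)))) by (field; lra).
    assert (h1 : INR wl / (INR wl + 1) <= 1) by (apply Rmult_le_reg_r with (INR wl + 1); [lra|];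
      unfold Rdiv; rewrite Rmult_assoc, Rinv_l; lra).
    assert (h2 : a / (a + 1) <= 1) by (apply Rmult_le_reg_r with (a + 1); [lra|];
      unfold Rdiv; rewrite Rmult_assoc, Rinv_l; lra).
    assert (0 <= INR wl / (INR wl + 1)) by (apply Rle_mult_inv_pos; lra).
    assert (0 <= a / (a + 1)) by (apply Rle_mult_inv_pos; lra).
    assert (INR wl / (INR wl + 1) * (a / (a + 1)) <= 1) by nra. nra. }
  intros Nn hNn. fold a.
  replace ((INR wl * q * Nn + Nn / INR (S (n + 2))) * a + Nn * INR D * x) with
    (Nn * (INR wl * q * a + a / INR (S (n + 2)) + INR D * x)) by (field; lra).
  nra.
Qed.

Lemma avoid_large (G : group) (Gs : nat -> G -> Prop)
  (hsofic : forall g : G, (forall n, exists i, (n <= i)%nat /\ Gs i g) -> g = gone) (l : list G) :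
  exists n0, forall n, (n0 <= n)%nat -> forall g, In g l -> Gs n g -> g = gone.
Proof.
  induction l as [|a l [n1 IH]].
  - exists 0%nat. intros n _ g [].
  - destruct (classic (a = gone)) as [ea|ea].
    + exists n1. intros n hn g [e|hg] hG; [subst; auto|]. apply (IH n hn); auto.
    + assert (hn : ~ (forall n, exists i, (n <= i)%nat /\ Gs i a)) by (intro h; apply ea, hsofic, h).
      apply not_all_ex_not in hn. destruct hn as [n2 hn2].
      exists (Nat.max n1 n2). intros n hn g [e|hg] hG.
      * subst g. exfalso. apply hn2. exists n. split; [lia|auto].
      * apply (IH n); auto; lia.
Qed.

Lemma exp_pow x M : exp x ^ M = exp (INR M * x).
Proof.
  induction M as [|M IH]; simpl; [rewrite Rmult_0_l, exp_0; reflexivity|].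
  rewrite IH, <- exp_plus. f_equal. destruct M; simpl; ring.
Qed.

Lemma scale_le k x y : 0 < k -> Rbar_le x (Fin y) -> Rbar_le (Rbar_scale k x) (Fin (k * y)).
Proof. intros hk. destruct x as [r| |]; simpl; auto. intros h. apply Rmult_le_compat_l; lra. Qed.

Theorem lemma8p8 (G : group) (Gs : nat -> G -> Prop) (f : G -> Z)
  (hG : countably_infinite G)
  (hnorm : forall n, normal_subgroup (Gs n))
  (hfin : forall n, finite_index (Gs n))
  (hsofic : forall g : G, (forall n, exists i, (n <= i)%nat /\ Gs i g) -> g = gone)
  (hf : well_balanced f) :
  Rbar_le (sofic_entropy Gs (Ff f))
          (Rbar_limsup (fun n => Rbar_scale (/ INR (index (Gs n))) (Rbar_lognat (tau (Gs n) f)))).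
Proof.
  set (b := fun n => Rbar_scale (/ INR (index (Gs n))) (Rbar_lognat (tau (Gs n) f))).
  apply sup_le. intros v [eps [heps ->]].
  apply le_approx. intros c hc.
  destruct (lt_between _ _ hc) as [c' [hc' hcc']].
  unfold Rbar_limsup in hc'. destruct (inf_lt _ _ hc') as [l [[N0 ->] hl]].
  assert (hbn : forall n, (N0 <= n)%nat -> Rbar_lt (b n) (Fin c')).
  { intros n hn hle. apply hl. eapply Rbar_le_trans; [exact hle|]. apply le_sup. exists n; auto. }
  set (gam := c - c').
  destruct (params gam (Dg G f) ltac:(unfold gam; lra)) as [x [L [hx [hL hpar]]]].
  set (W0 := W G f L).
  destruct (hpar (length W0)) as [delta [hdelta hbound]].
  destruct (avoid_large G Gs hsofic (ball G f L)) as [n0 hn0].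
  eapply Rbar_le_trans; [apply inf_le; exists W0; reflexivity|].
  eapply Rbar_le_trans; [apply inf_le; exists delta; split; [exact hdelta|reflexivity]|].
  unfold Rbar_limsup.
  eapply Rbar_le_trans; [apply inf_le; exists (Nat.max N0 n0); reflexivity|].
  apply sup_le. intros y [n [hn ->]].
  set (H := Gs n). set (Nn := INR (index H)).
  assert (hNn : 0 < Nn) by (apply lt_0_INR, index_pos, hfin).
  replace c with (/ Nn * (c * Nn)) by (field; lra).
  apply scale_le; [apply Rinv_0_lt_compat; auto|].
  apply sup_le. intros z [F [hM [hsep ->]]].
  assert (hcnt := countF G f hf H (hnorm n) (hfin n) L hL
                    (fun g hg hH => hn0 n ltac:(lia) g hg hH) delta eps F heps hM hsep).
  rewrite <- tau_Trees in hcnt.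
  set (S0 := length (Sm G f H L delta)) in *.
  destruct (length F) as [|lf] eqn:elf; [simpl; auto|].
  unfold Rbar_lognat. rewrite <- elf. simpl.
  assert (htau : (1 <= tau H f)%nat) by (destruct (tau H f); simpl in hcnt; lia).
  assert (hS0 : (1 <= S0)%nat) by (destruct S0; [rewrite Nat.mul_0_r in hcnt; lia|lia]).
  assert (hlt : ln (INR (tau H f)) < c' * Nn).
  { specialize (hbn n ltac:(lia)). unfold b, Rbar_lt, Rbar_lognat in hbn.
    fold H in hbn. destruct (tau H f) as [|t] eqn:et; [lia|].
    change (~ (c' <= / Nn * ln (INR (S t)))) in hbn.
    apply Rnot_le_lt in hbn.
    apply Rmult_lt_compat_l with (r := Nn) in hbn; auto.
    rewrite <- Rmult_assoc, Rinv_r, Rmult_1_l in hbn by lra. lra. }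
  assert (hSb := sm_bound (halfedges H f) (Kb G f H L delta) x hx).
  fold (Sm G f H L delta) in hSb. fold S0 in hSb.
  rewrite length_hs in hSb.
  assert (hpow : (1 + x) ^ (index H * Dg G f) <= exp (INR (index H * Dg G f) * x)).
  { rewrite <- exp_pow. apply pow_incr. split; [lra|]. apply exp_ineq1_le. }
  assert (hS0le : INR S0 <= exp (Kb G f H L delta * - ln x + INR (index H * Dg G f) * x)).
  { rewrite exp_plus. eapply Rle_trans; [exact hSb|]. apply Rmult_le_compat_l; auto.
    left; apply exp_pos. }
  assert (hS0pos : 0 < INR S0) by (apply lt_0_INR; lia).
  assert (hlnS : ln (INR S0) <= Kb G f H L delta * - ln x + INR (index H * Dg G f) * x).
  { rewrite <- (ln_exp (_ + _)). apply ln_le'; auto. }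
  assert (hF : INR (length F) <= INR (tau H f) * INR S0 * INR S0).
  { rewrite <- !mult_INR. apply le_INR. rewrite elf. exact hcnt. }
  assert (htaupos : 0 < INR (tau H f)) by (apply lt_0_INR; lia).
  assert (hlnF : ln (INR (length F)) <= ln (INR (tau H f)) + 2 * ln (INR S0)).
  { rewrite elf. eapply Rle_trans; [apply ln_le'; [apply lt_0_INR; lia|rewrite <- elf; exact hF]|].
    rewrite !ln_mult; try lra; try nra. }
  rewrite elf in hlnF.
  specialize (hbound Nn hNn).
  unfold Kb in hlnS. fold W0 in hlnS. fold Nn in hlnS.
  rewrite mult_INR in hlnS. fold Nn in hlnS.
  unfold gam in hbound. rewrite elf.
  set (Q := (INR (length W0) * delta ^ 2 * Nn + Nn / INR (S L)) * - ln x + Nn * INR (Dg G f) * x) in *.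
  assert (hP : 0 <= (c - c') * Nn) by (apply Rmult_le_pos; lra).
  replace (3 / 4 * (c - c') * Nn) with (3 / 4 * ((c - c') * Nn)) in hbound by ring.
  replace (c * Nn) with (c' * Nn + (c - c') * Nn) by ring.
  lra.
Qed.
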